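(* Let $T$ be a complete classical theory in a countable language (no model a singleton), $\Phi$ a rich sequence and $\mathbf{G}=\mathbf{G}_\Phi(T)$. The map $E\mapsto[E]_{\mathbf{G}}$ is a bijection between definable equivalence relations on $D_\Phi$ (up to equivalence modulo $T$) and the set $\mathcal{H}$ of clopen $\mathbf{H}\subseteq\mathbf{G}$ with $\mathbf{H}=\mathbf{H}\mathbf{H}^{-1}\supseteq\mathbf{B}$. In addition, if $\mathbf{H}=[E]_{\mathbf{G}}$, $a$ realises $D_\Phi$ and enumerates a countable model $M$, and $e=\mathrm{tp}(a)$, then $\mathrm{tp}(a,b)\mathbf{H}\mapsto[b]_E$ is a well-defined bijection from $e\mathbf{G}/\mathbf{H}=\{g\mathbf{H}:t_g=e\}$ onto the set of $E$-classes of tuples in $M$ realising $D_\Phi$.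
   Context: (Single-sorted for simplicity.) $\Phi=(\varphi_n(x_{<n},y))_n$, $y$ a single variable, is rich if every formula $\varphi(x_{<k},y)$ appears (with dummy variables) as $\varphi_n$ for some $n\ge k$. $D_{\Phi,n}(x_{<n})=\bigwedge_{k<n}\forall y[\varphi_k(x_{<k},y)\to\varphi_k(x_{\le k})]$, $D_\Phi=\bigwedge_nD_{\Phi,n}$. $\mathbf{G}_\Phi(T)$ is the set of types $\mathrm{tp}(a,b)$ (logic topology on types of pairs of $\mathbb{N}$-sequences) with $a,b$ realising $D_\Phi$ with the same set of entries; $\mathrm{tp}(a,b)\mathrm{tp}(b,c)=\mathrm{tp}(a,c)$, inverse $\mathrm{tp}(b,a)$, base $\mathbf{B}=\{\mathrm{tp}(a,a)\}$, $t_{\mathrm{tp}(a,b)}=\mathrm{tp}(a)$. A definable equivalence relation on $D_\Phi$ is a formula $E(x,y)$ (only finitely many of the variables $x_i,y_i$ occurring) which, modulo $T$, defines an equivalence relation on the realisations of $D_\Phi$; two are identified if they agree on $D_\Phi$. $[E]_{\mathbf{G}}=\{\mathrm{tp}(a,b)\in\mathbf{G}:E(a,b)\}$. *)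

(* Defs.v *)
From Stdlib Require Import Arith Fin.

Set Implicit Arguments.

Record language := {
  func : Type; rel : Type;
  farity : func -> nat; rarity : rel -> nat }.

Definition countable_language (L : language) : Prop :=
  (exists f : func L -> nat, forall x y, f x = f y -> x = y) /\
  (exists g : rel L -> nat, forall x y, g x = g y -> x = y).

Inductive term (L : language) : Type :=
| var : nat -> term L
| app : forall f : func L, (Fin.t (farity L f) -> term L) -> term L.

(* de Bruijn formulas: variable i under d binders refers to the
   assignment entry i-d; All binds index 0.  Classical connectives
   are derived from Fls, Imp, All. *)
Inductive formula (L : language) : Type :=
| Eqf : term L -> term L -> formula L
| Relf : forall r : rel L, (Fin.t (rarity L r) -> term L) -> formula L
| Fls : formula L
| Imp : formula L -> formula L -> formula L
| All : formula L -> formula L.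

Arguments var {L}. Arguments Fls {L}.

Record structure (L : language) := {
  dom :> Type;
  dom_inh : inhabited dom;
  finterp : forall f : func L, (Fin.t (farity L f) -> dom) -> dom;
  rinterp : forall r : rel L, (Fin.t (rarity L r) -> dom) -> Prop }.

Definition scons {X : Type} (x : X) (s : nat -> X) : nat -> X :=
  fun i => match i with 0 => x | S j => s j end.

Fixpoint teval {L} (M : structure L) (s : nat -> M) (t : term L) : M :=
  match t with
  | var i => s i
  | app f args => finterp M f (fun j => teval M s (args j))
  end.

Fixpoint sat {L} (M : structure L) (s : nat -> M) (phi : formula L) : Prop :=
  match phi with
  | Eqf t1 t2 => teval M s t1 = teval M s t2
  | Relf r args => rinterp M r (fun j => teval M s (args j))
  | Fls => False
  | Imp p q => sat M s p -> sat M s q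
  | All p => forall m : M, sat M (scons m s) p
  end.

Fixpoint trename {L} (rho : nat -> nat) (t : term L) : term L :=
  match t with
  | var i => var (rho i)
  | app f args => app f (fun j => trename rho (args j))
  end.

Definition uprn (rho : nat -> nat) : nat -> nat :=
  fun i => match i with 0 => 0 | S j => S (rho j) end.

Fixpoint frename {L} (rho : nat -> nat) (phi : formula L) : formula L :=
  match phi with
  | Eqf t1 t2 => Eqf (trename rho t1) (trename rho t2)
  | Relf r args => Relf r (fun j => trename rho (args j))
  | Fls => Fls
  | Imp p q => Imp (frename rho p) (frename rho q)
  | All p => All (frename (uprn rho) p)
  end.

Fixpoint tfvb {L} (n : nat) (t : term L) : Prop :=
  match t with
  | var i => i < n
  | app f args => forall j, tfvb n (args j)
  end.

Fixpoint ffvb {L} (n : nat) (phi : formula L) : Prop :=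
  match phi with
  | Eqf t1 t2 => tfvb n t1 /\ tfvb n t2
  | Relf r args => forall j, tfvb n (args j)
  | Fls => True
  | Imp p q => ffvb n p /\ ffvb n q
  | All p => ffvb (S n) p
  end.

Definition sentence {L} (phi : formula L) : Prop := ffvb 0 phi.

Definition theory (L : language) := formula L -> Prop.

Definition model {L} (T : theory L) (M : structure L) : Prop :=
  forall sigma, T sigma -> forall s : nat -> M, sat M s sigma.

Definition complete_theory {L} (T : theory L) : Prop :=
  (forall sigma, T sigma -> sentence sigma) /\
  (exists M : structure L, model T M) /\
  (forall sigma, sentence sigma ->
     (forall M : structure L, model T M -> forall s : nat -> M, sat M s sigma) \/
     (forall M : structure L, model T M -> forall s : nat -> M, ~ sat M s sigma)).

Definition no_singleton_model {L} (T : theory L) : Prop :=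
  forall M : structure L, model T M -> exists x y : M, x <> y.

(* phi_n(x_<n, y): x_i is variable i (i < n), y is variable n. *)
Definition seq_ok {L} (Phi : nat -> formula L) : Prop :=
  forall n, ffvb (S n) (Phi n).

Definition move_var (k n : nat) : nat -> nat :=
  fun i => if Nat.eqb i k then n else i.

(* every formula psi(x_<k, y) (free variables among 0..k, y = variable k)
   appears, with dummy variables x_k..x_{n-1}, as phi_n for some n >= k *)
Definition rich {L} (Phi : nat -> formula L) : Prop :=
  forall k (psi : formula L), ffvb (S k) psi ->
    exists n, k <= n /\ Phi n = frename (move_var k n) psi.

Definition upd {X : Type} (s : nat -> X) (k : nat) (y : X) : nat -> X :=
  fun i => if Nat.eqb i k then y else s i.

Definition DPhi {L} (Phi : nat -> formula L) (M : structure L) (a : nat -> M) : Prop :=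
  forall k, (forall y : M, sat M (upd a k y) (Phi k) -> sat M a (Phi k)).

Definition ty (L : language) := formula L -> Prop.
Definition eqty {L} (p q : ty L) : Prop := forall phi, p phi <-> q phi.

Definition tp {L} (M : structure L) (a : nat -> M) : ty L := fun phi => sat M a phi.

(* pair (a,b) of sequences encoded as one sequence: x_i = var 2i, y_i = var 2i+1 *)
Definition pr {X : Type} (a b : nat -> X) : nat -> X :=
  fun i => if Nat.even i then a (Nat.div2 i) else b (Nat.div2 i).

Definition tp2 {L} (M : structure L) (a b : nat -> M) : ty L := tp M (pr a b).

Definition same_entries {X : Type} (a b : nat -> X) : Prop :=
  (forall i, exists j, a i = b j) /\ (forall j, exists i, b j = a i).

Section G.
Context {L : language} (T : theory L) (Phi : nat -> formula L).

Definition Gpair (M : structure L) (a b : nat -> M) : Prop :=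
  model T M /\ DPhi Phi M a /\ DPhi Phi M b /\ same_entries a b.

Definition Gset (p : ty L) : Prop :=
  exists (M : structure L) (a b : nat -> M), Gpair M a b /\ eqty p (tp2 M a b).

Definition Bset (p : ty L) : Prop :=
  exists (M : structure L) (a : nat -> M),
    model T M /\ DPhi Phi M a /\ eqty p (tp2 M a a).

(* logic topology, relativised to G: basic open sets [phi] *)
Definition G_open (U : ty L -> Prop) : Prop :=
  (forall p, U p -> Gset p) /\
  (forall p, U p -> exists phi, p phi /\ forall q, Gset q -> q phi -> U q).

Definition G_clopen (U : ty L -> Prop) : Prop :=
  G_open U /\ G_open (fun p => Gset p /\ ~ U p).

(* H H^{-1} = { tp(a,b) tp(b,c) : tp(a,b) in H, tp(b,c)^{-1} = tp(c,b) in H } *)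
Definition HHinv (H : ty L -> Prop) (k : ty L) : Prop :=
  exists (M : structure L) (a b c : nat -> M),
    Gpair M a b /\ Gpair M c b /\ H (tp2 M a b) /\ H (tp2 M c b) /\
    eqty k (tp2 M a c).

Definition Hcal (H : ty L -> Prop) : Prop :=
  G_clopen H /\ (forall k, H k <-> HHinv H k) /\ (forall p, Bset p -> H p).

(* coset g H = { g h : h in H } with tp(a,b) tp(b,c) = tp(a,c) *)
Definition coset (g : ty L) (H : ty L -> Prop) (k : ty L) : Prop :=
  exists (M : structure L) (a b c : nat -> M),
    Gpair M a b /\ Gpair M b c /\ eqty g (tp2 M a b) /\ H (tp2 M b c) /\
    eqty k (tp2 M a c).

(* e G / H = { g H : g in G, t_g = e } *)
Definition eGmodH (e : ty L) (H : ty L -> Prop) (C : ty L -> Prop) : Prop :=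
  exists (M : structure L) (a b : nat -> M),
    Gpair M a b /\ eqty (tp M a) e /\ (forall k, C k <-> coset (tp2 M a b) H k).

Definition def_equiv (E : formula L) : Prop :=
  forall M : structure L, model T M ->
    (forall a : nat -> M, DPhi Phi M a -> sat M (pr a a) E) /\
    (forall a b : nat -> M, DPhi Phi M a -> DPhi Phi M b ->
        sat M (pr a b) E -> sat M (pr b a) E) /\
    (forall a b c : nat -> M, DPhi Phi M a -> DPhi Phi M b -> DPhi Phi M c ->
        sat M (pr a b) E -> sat M (pr b c) E -> sat M (pr a c) E).

Definition agree_on_D (E E' : formula L) : Prop :=
  forall M : structure L, model T M -> forall a b : nat -> M,
    DPhi Phi M a -> DPhi Phi M b -> (sat M (pr a b) E <-> sat M (pr a b) E').

Definition bracket (E : formula L) (p : ty L) : Prop := Gset p /\ p E.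

End G.

(* Main.v *)
Require Import Defs.
From Stdlib Require Import Arith Fin.
From Stdlib Require Import Lia List Cantor.
From Stdlib Require Import FunctionalExtensionality PropExtensionality ClassicalEpsilon ProofIrrelevance Classical.
Import ListNotations.

Unset Implicit Arguments.
Arguments to_nat : simpl never.


Section Basics.
Context {L : language}.

Lemma teval_rename (M : structure L) (s : nat -> M) rho (t : term L) :
  teval M s (trename rho t) = teval M (fun v => s (rho v)) t.
Proof.
  induction t as [i|f args IH]; simpl; auto.
  f_equal. apply functional_extensionality. intro j. apply IH.
Qed.

Lemma sat_rename (M : structure L) rho (phi : formula L) : forall (s : nat -> M),
  sat M s (frename rho phi) <-> sat M (fun v => s (rho v)) phi.
Proof.
  revert rho; induction phi as [t1 t2|r args| |p IHp q IHq|p IHp]; intros rho s; simpl.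
  - rewrite !teval_rename. tauto.
  - assert (E : (fun j => teval M s (trename rho (args j))) = (fun j => teval M (fun v => s (rho v)) (args j))).
    { apply functional_extensionality; intro; apply teval_rename. }
    rewrite E; tauto.
  - tauto.
  - rewrite IHp, IHq; tauto.
  - split; intros H m; specialize (H m); rewrite IHp in *;
    (assert (E : (fun v => scons m s (uprn rho v)) = scons m (fun v => s (rho v)))
      by (apply functional_extensionality; intros [|v]; reflexivity));
    rewrite E in *; exact H.
Qed.

Lemma teval_coinc (M : structure L) (t : term L) : forall n (s s' : nat -> M),
  tfvb n t -> (forall v, v < n -> s v = s' v) -> teval M s t = teval M s' t.
Proof.
  induction t as [i|f args IH]; intros n s s' Hf He; simpl in *; auto.
  f_equal. apply functional_extensionality. intro j. eapply IH; eauto.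
Qed.

Lemma sat_coinc (M : structure L) (phi : formula L) : forall n (s s' : nat -> M),
  ffvb n phi -> (forall v, v < n -> s v = s' v) -> (sat M s phi <-> sat M s' phi).
Proof.
  induction phi as [t1 t2|r args| |p IHp q IHq|p IHp]; intros n s s' Hf He; simpl in *.
  - destruct Hf. rewrite (@teval_coinc M t1 n s s' H He), (@teval_coinc M t2 n s s' H0 He). tauto.
  - assert (E : (fun j => teval M s (args j)) = (fun j => teval M s' (args j))).
    { apply functional_extensionality; intro j; eapply teval_coinc; eauto. }
    rewrite E; tauto.
  - tauto.
  - destruct Hf. rewrite (IHp n s s' H He), (IHq n s s' H0 He). tauto.
  - assert (E : forall m, sat M (scons m s) p <-> sat M (scons m s') p).
    { intro m. apply (IHp (S n)); [exact Hf|]. intros [|v] Hv; simpl; auto. apply He; lia. }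
    split; intros H m; specialize (H m); apply E; auto; apply E; auto.
Qed.

Lemma tfvb_mono (t : term L) : forall n m, n <= m -> tfvb n t -> tfvb m t.
Proof. induction t; simpl; intros; eauto; lia. Qed.

Lemma ffvb_mono (phi : formula L) : forall n m, n <= m -> ffvb n phi -> ffvb m phi.
Proof.
  induction phi; simpl; intros n m Hle H; intuition eauto using tfvb_mono.
  eapply IHphi; [|exact H]; lia.
Qed.

Lemma tfvb_rename (t : term L) : forall n m rho, tfvb n t -> (forall v, v < n -> rho v < m) ->
  tfvb m (trename rho t).
Proof. induction t; simpl; intros; eauto. Qed.

Lemma ffvb_rename (phi : formula L) : forall n m rho, ffvb n phi -> (forall v, v < n -> rho v < m) ->
  ffvb m (frename rho phi).
Proof.
  induction phi; simpl; intros n m rho H Hr; intuition eauto using tfvb_rename.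
  eapply IHphi; [exact H|]. intros [|v] Hv; simpl; [lia|]. specialize (Hr v). lia.
Qed.

Lemma trename_comp (t : term L) r1 r2 :
  trename r1 (trename r2 t) = trename (fun v => r1 (r2 v)) t.
Proof.
  induction t; simpl; auto. f_equal. apply functional_extensionality; auto.
Qed.

Lemma frename_comp (phi : formula L) : forall r1 r2,
  frename r1 (frename r2 phi) = frename (fun v => r1 (r2 v)) phi.
Proof.
  induction phi; intros; simpl; rewrite ?trename_comp; auto.
  - f_equal. apply functional_extensionality; intro; apply trename_comp.
  - f_equal; auto.
  - f_equal. rewrite IHphi. f_equal. apply functional_extensionality. intros [|v]; reflexivity.
Qed.

Fixpoint finmax (n : nat) : (Fin.t n -> nat) -> nat :=
  match n with
  | 0 => fun _ => 0
  | S n' => fun g => Nat.max (g Fin.F1) (finmax n' (fun k => g (Fin.FS k)))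
  end.

Lemma finmax_ge : forall n (k : Fin.t n) (g : Fin.t n -> nat), g k <= finmax n g.
Proof.
  induction k; intros g; simpl.
  - lia.
  - specialize (IHk (fun k => g (Fin.FS k))). simpl in IHk. lia.
Qed.

Fixpoint fin_list (n : nat) : list (Fin.t n) :=
  match n with
  | 0 => []
  | S n' => Fin.F1 :: map Fin.FS (fin_list n')
  end.

Lemma fin_list_In : forall n (k : Fin.t n), In k (fin_list n).
Proof.
  induction k; simpl; auto. right. apply in_map. auto.
Qed.

Fixpoint tfv (t : term L) : nat :=
  match t with
  | var i => S i
  | Defs.app f args => finmax (farity L f) (fun k => tfv (args k))
  end.

Fixpoint ffv (phi : formula L) : nat :=
  match phi with
  | Eqf t1 t2 => Nat.max (tfv t1) (tfv t2)
  | Relf r args => finmax (rarity L r) (fun k => tfv (args k))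
  | Fls => 0
  | Imp p q => Nat.max (ffv p) (ffv q)
  | All p => pred (ffv p)
  end.

Lemma tfv_ok (t : term L) : tfvb (tfv t) t.
Proof.
  induction t; simpl; [lia|]. intro j. eapply tfvb_mono; [|apply H].
  apply (finmax_ge _ j (fun k => tfv (t k))).
Qed.

Lemma ffv_ok (phi : formula L) : ffvb (ffv phi) phi.
Proof.
  induction phi; simpl.
  - split; eapply tfvb_mono; try apply tfv_ok; lia.
  - intro j. eapply tfvb_mono; [|apply tfv_ok]. apply (finmax_ge _ j (fun k => tfv (t k))).
  - auto.
  - split; [apply (ffvb_mono phi1 (ffv phi1))|apply (ffvb_mono phi2 (ffv phi2))]; auto; lia.
  - apply (ffvb_mono phi (ffv phi)); auto; lia.
Qed.

Lemma pr_even {X} (a b : nat -> X) i : pr a b (2 * i) = a i.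
Proof. unfold pr. rewrite Nat.even_even, Nat.div2_double. auto. Qed.
Lemma pr_odd {X} (a b : nat -> X) i : pr a b (2 * i + 1) = b i.
Proof. unfold pr. rewrite Nat.even_odd, Nat.div2_odd'. auto. Qed.

Lemma even_or_odd v : exists i, v = 2 * i \/ v = 2 * i + 1.
Proof.
  exists (Nat.div2 v). pose proof (Nat.div2_odd v). destruct (Nat.odd v); simpl in *; lia.
Qed.

Lemma pr_eq {X} (f g : nat -> X) (a b : nat -> X) :
  (forall i, f (2 * i) = a i) -> (forall i, f (2 * i + 1) = b i) -> f = pr a b.
Proof.
  intros H1 H2. apply functional_extensionality. intro v.
  destruct (even_or_odd v) as [i [-> | ->]]; rewrite ?pr_even, ?pr_odd; auto.
Qed.

End Basics.


Definition neg {L} (p : formula L) : formula L := Imp p Fls.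

Section Enum.
Context {L : language} (fF : func L -> nat) (fR : rel L -> nat)
  (HfF : forall x y, fF x = fF y -> x = y) (HfR : forall x y, fR x = fR y -> x = y).

Lemma to_nat_inj p q : to_nat p = to_nat q -> p = q.
Proof. intro H. rewrite <- (cancel_of_to p), <- (cancel_of_to q), H. auto. Qed.

Fixpoint code_list (l : list nat) : nat :=
  match l with [] => 0 | x :: l => S (to_nat (x, code_list l)) end.

Lemma code_list_inj : forall l1 l2, code_list l1 = code_list l2 -> l1 = l2.
Proof.
  induction l1 as [|x l1 IH]; intros [|y l2] H; simpl in *; try discriminate; auto.
  injection H as H. apply to_nat_inj in H. injection H as -> H. f_equal; auto.
Qed.

Fixpoint code_t (t : term L) : nat :=
  match t with
  | var i => to_nat (0, i)
  | Defs.app f args => to_nat (S (fF f), code_list (map (fun k => code_t (args k)) (fin_list _)))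
  end.

Lemma map_eq_In {A B} (f g : A -> B) l x : map f l = map g l -> In x l -> f x = g x.
Proof.
  induction l; simpl; intros H Hi; [contradiction|]. injection H as H1 H2.
  destruct Hi as [->|Hi]; auto.
Qed.

Lemma code_t_inj : forall t1 t2, code_t t1 = code_t t2 -> t1 = t2.
Proof.
  induction t1 as [i|f args IH]; intros [j|g args2] H; simpl in H; apply to_nat_inj in H;
    injection H; intros; try discriminate.
  - subst; auto.
  - apply HfF in H1. subst g. apply code_list_inj in H0.
    assert (args = args2).
    { apply functional_extensionality. intro k. apply IH.
      exact (map_eq_In _ _ _ k H0 (fin_list_In _ k)). }
    subst; auto.
Qed.

Fixpoint code_f (phi : formula L) : nat :=
  match phi with
  | Eqf t1 t2 => to_nat (0, to_nat (code_t t1, code_t t2))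
  | Relf r args => to_nat (1, to_nat (fR r, code_list (map (fun k => code_t (args k)) (fin_list _))))
  | Fls => to_nat (2, 0)
  | Imp p q => to_nat (3, to_nat (code_f p, code_f q))
  | All p => to_nat (4, code_f p)
  end.

Lemma code_f_inj : forall p q, code_f p = code_f q -> p = q.
Proof.
  induction p as [t1 t2|r args| |p1 IH1 p2 IH2|p IH]; intros [u1 u2|r2 args2| |q1 q2|q] H;
    simpl in H; apply to_nat_inj in H; try discriminate; try reflexivity; injection H; intros.
  - apply to_nat_inj in H0. injection H0; intros. apply code_t_inj in H1, H2. subst; auto.
  - apply to_nat_inj in H0. injection H0; intros. apply HfR in H2. subst r2.
    apply code_list_inj in H1.
    assert (args = args2).
    { apply functional_extensionality. intro k. apply code_t_inj.
      exact (map_eq_In _ _ _ k H1 (fin_list_In _ k)). }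
    subst; auto.
  - apply to_nat_inj in H0. injection H0; intros. f_equal; auto.
  - f_equal; auto.
Qed.

Definition enum (n : nat) : formula L := epsilon (inhabits Fls) (fun phi => code_f phi = n).

Lemma enum_surj phi : enum (code_f phi) = phi.
Proof.
  apply code_f_inj. unfold enum. apply (epsilon_spec (inhabits Fls) (fun p => code_f p = code_f phi)).
  eauto.
Qed.

End Enum.


Section Henkin.
Context {L : language} (T : theory L) (en : nat -> formula L)
  (en_surj : forall phi, exists n, en n = phi).

Definition satl (l : list (formula L)) : Prop :=
  exists (M : structure L) (s : nat -> M), model T M /\ forall psi, In psi l -> sat M s psi.

Definition FS (G : formula L -> Prop) : Prop :=
  forall l, (forall psi, In psi l -> G psi) -> satl l.

Lemma FS_sub (G G' : formula L -> Prop) : (forall p, G p -> G' p) -> FS G' -> FS G.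
Proof. intros H F l Hl. apply F. intros; auto. Qed.

Lemma split_list (P Q : formula L -> Prop) l : (forall psi, In psi l -> P psi \/ Q psi) ->
  exists l1, (forall psi, In psi l1 -> P psi) /\ (forall psi, In psi l -> In psi l1 \/ Q psi).
Proof.
  induction l as [|x l IH]; intros H.
  - exists []. simpl; tauto.
  - destruct IH as [l1 [H1 H2]]. { intros; apply H; simpl; auto. }
    destruct (H x (or_introl eq_refl)) as [Px|Qx].
    + exists (x :: l1). split. { intros psi [<-|Hp]; auto. }
      intros psi [<-|Hp]; simpl; auto. destruct (H2 psi Hp); auto.
    + exists l1. split; auto. intros psi [<-|Hp]; auto.
Qed.

Variable Sig : formula L -> Prop.
Hypothesis FSig : FS Sig.

Definition dbl (v : nat) := 2 * v.

Definition G0 (psi : formula L) : Prop := exists phi, Sig phi /\ psi = frename dbl phi.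

Lemma FS_G0 : FS G0.
Proof.
  intros l Hl.
  assert (exists l', (forall phi, In phi l' -> Sig phi) /\
            forall psi, In psi l -> exists phi, In phi l' /\ psi = frename dbl phi) as [l' [H1 H2]].
  { clear -Hl. induction l as [|x l IH].
    - exists []; simpl; split; tauto.
    - destruct IH as [l' [H1 H2]]. { intros; apply Hl; simpl; auto. }
      destruct (Hl x (or_introl eq_refl)) as [phi [Sp ->]].
      exists (phi :: l'). split. { intros p [<-|Hp]; auto. }
      intros psi [<-|Hp]. { exists phi; simpl; auto. }
      destruct (H2 psi Hp) as [q [Hq ->]]. exists q; simpl; auto. }
  destruct (FSig l' H1) as [M [s [HM Hs]]].
  exists M, (fun v => s (Nat.div2 v)). split; auto.
  intros psi Hp. destruct (H2 psi Hp) as [phi [Hphi ->]].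
  apply sat_rename. unfold dbl.
  assert (E : (fun v => s (Nat.div2 (2 * v))) = s).
  { apply functional_extensionality; intro v; rewrite Nat.div2_double; auto. }
  rewrite E. auto.
Qed.

Definition wit (chi : formula L) (w : nat) : list (formula L) :=
  match chi with
  | Imp (All p) Fls => [neg (frename (scons w (fun v => v)) p)]
  | _ => []
  end.

Fixpoint sumffv (l : list (formula L)) : nat :=
  match l with [] => 0 | x :: l => ffv x + sumffv l end.

Lemma sumffv_ge l x : In x l -> ffv x <= sumffv l.
Proof. induction l; simpl; [tauto|]. intros [->|H]; [lia|]. specialize (IHl H); lia. Qed.

Definition Gl (l : list (formula L)) (psi : formula L) : Prop := G0 psi \/ In psi l.

Fixpoint A (n : nat) : list (formula L) :=
  match n with
  | 0 => []
  | S n =>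
      let B := A n in
      if excluded_middle_informative (FS (Gl (en n :: B)))
      then wit (en n) (S (2 * sumffv (en n :: B))) ++ en n :: B
      else B
  end.

Lemma A_mono : forall n m psi, n <= m -> In psi (A n) -> In psi (A m).
Proof.
  intros n m psi Hle. induction Hle; auto. intro H. simpl.
  destruct excluded_middle_informative; auto. apply in_or_app. right. right. auto.
Qed.

Lemma G0_even psi (M : structure L) (s s' : nat -> M) :
  G0 psi -> (forall v, s (2 * v) = s' (2 * v)) -> (sat M s psi <-> sat M s' psi).
Proof.
  intros [phi [_ ->]] H. rewrite !sat_rename. unfold dbl.
  assert (E : (fun v => s (2 * v)) = (fun v => s' (2 * v))) by (apply functional_extensionality; auto).
  rewrite E. tauto.
Qed.

Lemma FS_wit chi B : FS (Gl (chi :: B)) ->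
  FS (Gl (wit chi (S (2 * sumffv (chi :: B))) ++ chi :: B)).
Proof.
  intros F.
  set (w := S (2 * sumffv (chi :: B))).
  destruct chi as [| | |c1 c2|]; simpl wit; simpl app; auto.
  destruct c1 as [| | | |p]; simpl; auto. destruct c2; simpl; auto.
  fold w.
  intros l Hl.
  destruct (split_list (Gl (Imp (All p) Fls :: B)) (fun psi => psi = neg (frename (scons w (fun v => v)) p)) l)
    as [l1 [H1 H2]].
  { intros psi Hp. destruct (Hl psi Hp) as [G|[<-|I]]; unfold Gl; auto. }
  destruct (F (Imp (All p) Fls :: l1)) as [M [s [HM Hs]]].
  { intros psi [<-|Hp]; [right; left; auto|]. auto. }
  assert (Hn := Hs _ (or_introl eq_refl)). simpl in Hn.
  assert (exists m, ~ sat M (scons m s) p) as [m Hm].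
  { apply not_all_ex_not. auto. }
  exists M, (fun v => if Nat.eqb v w then m else s v). split; auto.
  assert (Hbnd : forall x, In x (Imp (All p) Fls :: B) -> ffv x < w).
  { intros x Hx. apply sumffv_ge in Hx. unfold w. lia. }
  assert (Hagree : forall x, In x (Imp (All p) Fls :: B) ->
            (sat M s x <-> sat M (fun v => if Nat.eqb v w then m else s v) x)).
  { intros x Hx. apply (sat_coinc M x (ffv x)); [apply ffv_ok|].
    intros v Hv. specialize (Hbnd x Hx). destruct (Nat.eqb_spec v w); [lia|auto]. }
  intros psi Hp. destruct (H2 psi Hp) as [Hp1| ->].
  - destruct (H1 psi Hp1) as [G|I].
    + assert (Hev : forall v, s (2 * v) = (fun v => if Nat.eqb v w then m else s v) (2 * v)).
      { intro v. destruct (Nat.eqb_spec (2 * v) w); auto. unfold w in *. lia. }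
      apply (proj1 (G0_even psi M s _ G Hev)). apply Hs. simpl; auto.
    + apply Hagree; auto. apply Hs. simpl; auto.
  - simpl. intro Hq. apply Hm. apply sat_rename in Hq.
    assert (Hb := Hbnd _ (or_introl eq_refl)). simpl in Hb.
    revert Hq. apply (sat_coinc M p (ffv p)); [apply ffv_ok|].
    intros [|v] Hv; simpl.
    + rewrite Nat.eqb_refl. auto.
    + destruct (Nat.eqb_spec v w); auto. lia.
Qed.

Lemma FS_stage n : FS (Gl (A n)).
Proof.
  induction n; simpl.
  - apply (FS_sub _ G0); [|apply FS_G0]. intros p [H|[]]; auto.
  - destruct excluded_middle_informative as [F|F]; auto. apply FS_wit; auto.
Qed.

Definition Gam (psi : formula L) : Prop := G0 psi \/ exists n, In psi (A n).

Lemma FS_Gam : FS Gam.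
Proof.
  intros l Hl.
  assert (exists n, forall psi, In psi l -> Gl (A n) psi) as [n Hn].
  { clear -Hl. induction l as [|x l IH].
    - exists 0. simpl; tauto.
    - destruct IH as [n Hn]. { intros; apply Hl; simpl; auto. }
      destruct (Hl x (or_introl eq_refl)) as [G|[m Hm]].
      + exists n. intros psi [<-|Hp]; [left; auto|auto].
      + exists (n + m). intros psi [<-|Hp].
        * right. apply (A_mono m); auto. lia.
        * destruct (Hn psi Hp) as [G|I]; [left; auto|right]. apply (A_mono n); auto. lia. }
  apply (FS_stage n). auto.
Qed.

Lemma not_added n : ~ Gam (en n) -> ~ FS (Gl (en n :: A n)).
Proof.
  intros H F. apply H. right. exists (S n). simpl.
  destruct excluded_middle_informative; [|contradiction].
  apply in_or_app; right; left; auto.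
Qed.

Lemma Gam_complete phi : Gam phi \/ Gam (neg phi).
Proof.
  apply NNPP. intro H. apply not_or_and in H as [H1 H2].
  destruct (en_surj phi) as [n <-]. destruct (en_surj (neg (en n))) as [m Hm].
  apply not_added in H1. rewrite <- Hm in H2. apply not_added in H2. rewrite Hm in H2.
  assert (F1 : ~ FS (Gl (en n :: A (n + m)))).
  { intro F. apply H1. apply (FS_sub _ (Gl (en n :: A (n + m)))); [|exact F]. intros p [G|[<-|I]]; [left|right;left|right;right]; auto.
    apply (A_mono n); auto; lia. }
  assert (F2 : ~ FS (Gl (neg (en n) :: A (n + m)))).
  { intro F. apply H2. apply (FS_sub _ (Gl (neg (en n) :: A (n + m)))); [|exact F]. intros p [G|[<-|I]]; [left|right;left|right;right]; auto.
    apply (A_mono m); auto; lia. }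
  unfold FS in F1, F2.
  apply not_all_ex_not in F1 as [l1 F1]. apply imply_to_and in F1 as [Hl1 Nl1].
  apply not_all_ex_not in F2 as [l2 F2]. apply imply_to_and in F2 as [Hl2 Nl2].
  destruct (split_list (Gl (A (n + m))) (fun p => p = en n) l1) as [k1 [K1 K1']].
  { intros p Hp. destruct (Hl1 p Hp) as [G|[<-|I]]; unfold Gl; auto. }
  destruct (split_list (Gl (A (n + m))) (fun p => p = neg (en n)) l2) as [k2 [K2 K2']].
  { intros p Hp. destruct (Hl2 p Hp) as [G|[<-|I]]; unfold Gl; auto. }
  destruct (FS_stage (n + m) (k1 ++ k2)) as [M [s [HM Hs]]].
  { intros p Hp. apply in_app_or in Hp as [Hp|Hp]; auto. }
  destruct (classic (sat M s (en n))) as [Y|N].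
  - apply Nl1. exists M, s. split; auto. intros p Hp. destruct (K1' p Hp) as [I| ->]; auto.
    apply Hs. apply in_or_app; auto.
  - apply Nl2. exists M, s. split; auto. intros p Hp. destruct (K2' p Hp) as [I| ->]; auto.
    apply Hs. apply in_or_app; auto.
Qed.

Lemma Gam_closed l phi : (forall psi, In psi l -> Gam psi) ->
  (forall (M : structure L) (s : nat -> M), model T M -> (forall psi, In psi l -> sat M s psi) -> sat M s phi) ->
  Gam phi.
Proof.
  intros Hl Hc. destruct (Gam_complete phi) as [|Hn]; auto.
  destruct (FS_Gam (neg phi :: l)) as [M [s [HM Hs]]].
  { intros p [<-|Hp]; auto. }
  exfalso. apply (Hs _ (or_introl eq_refl)). apply Hc; auto. intros; apply Hs; simpl; auto.
Qed.

Lemma Gam_Fls : ~ Gam Fls.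
Proof.
  intro H. destruct (FS_Gam [Fls]) as [M [s [_ Hs]]]. { intros p [<-|[]]; auto. }
  exact (Hs _ (or_introl eq_refl)).
Qed.

Lemma Gam_imp p q : Gam (Imp p q) <-> (Gam p -> Gam q).
Proof.
  split.
  - intros H Hp. apply (Gam_closed [Imp p q; p]).
    + intros x [<-|[<-|[]]]; auto.
    + intros M s _ Hs. apply (Hs _ (or_introl eq_refl)). apply Hs; simpl; auto.
  - intro H. destruct (Gam_complete p) as [Hp|Hp].
    + apply (Gam_closed [q]). { intros x [<-|[]]; auto. }
      intros M s _ Hs _. apply Hs; simpl; auto.
    + apply (Gam_closed [neg p]). { intros x [<-|[]]; auto. }
      intros M s _ Hs Hp'. exfalso. apply (Hs _ (or_introl eq_refl)). auto.
Qed.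

Lemma Gam_henkin p : Gam (neg (All p)) -> exists w, Gam (neg (frename (scons w (fun v => v)) p)).
Proof.
  intro H. destruct (en_surj (neg (All p))) as [n Hn].
  assert (F : FS (Gl (en n :: A n))).
  { apply (FS_sub _ Gam); [|apply FS_Gam]. intros x [G|[<-|I]]; [left; auto| rewrite Hn; auto | right; eauto]. }
  exists (S (2 * sumffv (en n :: A n))). right. exists (S n). simpl.
  destruct excluded_middle_informative; [|contradiction].
  apply in_or_app. left. rewrite Hn. simpl. auto.
Qed.

Lemma Gam_all p : Gam (All p) <-> forall j, Gam (frename (scons j (fun v => v)) p).
Proof.
  split.
  - intros H j. apply (Gam_closed [All p]). { intros x [<-|[]]; auto. }
    intros M s _ Hs. apply sat_rename.
    assert (E : (fun v => s (scons j (fun v => v) v)) = scons (s j) s)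
      by (apply functional_extensionality; intros [|v]; reflexivity).
    rewrite E. apply (Hs _ (or_introl eq_refl)).
  - intro H. destruct (Gam_complete (All p)) as [|Hn]; auto.
    destruct (Gam_henkin p Hn) as [w Hw]. exfalso.
    apply Gam_Fls. apply (proj1 (Gam_imp _ _) Hw). apply H.
Qed.

Definition Geq (i j : nat) : Prop := Gam (Eqf (var i) (var j)).

Lemma Geq_refl i : Geq i i.
Proof. apply (Gam_closed []). { intros _ []. } intros; simpl; auto. Qed.

Lemma Geq_sym i j : Geq i j -> Geq j i.
Proof.
  intro H. apply (Gam_closed [Eqf (var i) (var j)]). { intros x [<-|[]]; auto. }
  intros M s _ Hs. specialize (Hs _ (or_introl eq_refl)). simpl in *. auto.
Qed.

Lemma Geq_trans i j k : Geq i j -> Geq j k -> Geq i k.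
Proof.
  intros H1 H2. apply (Gam_closed [Eqf (var i) (var j); Eqf (var j) (var k)]).
  { intros x [<-|[<-|[]]]; auto. }
  intros M s _ Hs. pose proof (Hs _ (or_introl eq_refl)). pose proof (Hs _ (or_intror (or_introl eq_refl))).
  simpl in *. congruence.
Qed.

Definition Dom : Type := {P : nat -> Prop | exists i, P = fun j => Geq i j}.

Definition cls (i : nat) : Dom := exist _ (fun j => Geq i j) (ex_intro _ i eq_refl).

Lemma cls_eq i j : cls i = cls j <-> Geq i j.
Proof.
  split.
  - intro H. assert (E : (fun k => Geq i k) = (fun k => Geq j k)).
    { exact (f_equal (@proj1_sig _ _) H). }
    change ((fun k => Geq i k) j). rewrite E. apply Geq_refl.
  - intro H. unfold cls.
    assert (E : (fun k => Geq i k) = (fun k => Geq j k)).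
    { apply functional_extensionality; intro k. apply propositional_extensionality.
      split; intro; [apply (Geq_trans j i k); auto; apply Geq_sym; auto|apply (Geq_trans i j k); auto]. }
    revert H. generalize (ex_intro (fun i0 : nat => (fun k : nat => Geq i k) = (fun j0 : nat => Geq i0 j0)) i eq_refl).
    rewrite E. intros. f_equal. apply proof_irrelevance.
Qed.

Definition rep (d : Dom) : nat := proj1_sig (constructive_indefinite_description _ (proj2_sig d)).

Lemma cls_rep d : cls (rep d) = d.
Proof.
  destruct d as [P HP]. unfold rep; simpl.
  destruct (constructive_indefinite_description _ HP) as [i Hi]; simpl.
  subst P. unfold cls. f_equal. apply proof_irrelevance.
Qed.

Lemma Geq_rep i : Geq (rep (cls i)) i.
Proof. apply cls_eq. apply cls_rep. Qed.

Definition fint (f : func L) (v : Fin.t (farity L f) -> Dom) : Dom :=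
  cls (epsilon (inhabits 0) (fun w => Gam (Eqf (var w) (Defs.app f (fun k => var (rep (v k))))))).

Lemma fint_spec f (js : Fin.t (farity L f) -> nat) :
  exists w, Gam (Eqf (var w) (Defs.app f (fun k => var (js k)))).
Proof.
  assert (H : Gam (neg (All (neg (Eqf (var 0) (Defs.app f (fun k => var (S (js k))))))))).
  { apply (Gam_closed []). { intros _ []. }
    intros M s _ _. simpl. intro H.
    apply (H (finterp M f (fun k => s (js k)))). reflexivity. }
  destruct (Gam_henkin _ H) as [w Hw]. exists w.
  apply (Gam_closed [neg (frename (scons w (fun v => v)) (neg (Eqf (var 0) (Defs.app f (fun k => var (S (js k)))))))]).
  { intros x [<-|[]]; auto. }
  intros M s _ Hs. specialize (Hs _ (or_introl eq_refl)). simpl in *.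
  apply NNPP. auto.
Qed.

Definition rint (r : rel L) (v : Fin.t (rarity L r) -> Dom) : Prop :=
  Gam (Relf r (fun k => var (rep (v k)))).

Definition TM : structure L := {| dom := Dom; dom_inh := inhabits (cls 0); finterp := fint; rinterp := rint |}.

Lemma In_fin_map {n} (F : Fin.t n -> formula L) x : In x (map F (fin_list n)) -> exists k, x = F k.
Proof. intro H. apply in_map_iff in H as [k [<- _]]. eauto. Qed.

Lemma term_lemma (t : term L) : forall sg : nat -> nat,
  exists j, teval TM (fun i => cls (sg i)) t = cls j /\ Gam (Eqf (var j) (trename sg t)).
Proof.
  induction t as [i|f args IH]; intros sg.
  - exists (sg i). split; auto. apply Geq_refl.
  - destruct (choice (fun k j => teval TM (fun i => cls (sg i)) (args k) = cls j /\
        Gam (Eqf (var j) (trename sg (args k))))) as [js Hjs]; [intro k; apply IH|].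
    simpl.
    assert (E : (fun j => teval TM (fun i => cls (sg i)) (args j)) = (fun k => cls (js k))).
    { apply functional_extensionality; intro k; apply Hjs. }
    rewrite E. unfold fint.
    set (w := epsilon _ _).
    assert (Hw : Gam (Eqf (var w) (Defs.app f (fun k => var (rep (cls (js k))))))).
    { apply (epsilon_spec (inhabits 0) (fun w => Gam (Eqf (var w) (Defs.app f (fun k => var (rep (cls (js k)))))))).
      apply fint_spec. }
    exists w. split; auto.
    apply (Gam_closed (Eqf (var w) (Defs.app f (fun k => var (rep (cls (js k))))) ::
       map (fun k => Eqf (var (rep (cls (js k)))) (trename sg (args k))) (fin_list _))).
    + intros x [<-|Hx]; auto. apply In_fin_map in Hx as [k ->].
      apply (Gam_closed [Eqf (var (rep (cls (js k)))) (var (js k)); Eqf (var (js k)) (trename sg (args k))]).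
      * intros x [<-|[<-|[]]]; [apply Geq_rep|apply Hjs].
      * intros M s _ Hs. pose proof (Hs _ (or_introl eq_refl)). pose proof (Hs _ (or_intror (or_introl eq_refl))).
        simpl in *. congruence.
    + intros M s _ Hs. pose proof (Hs _ (or_introl eq_refl)) as H0. simpl in *. rewrite H0.
      f_equal. apply functional_extensionality. intro k.
      assert (I : In (Eqf (var (rep (cls (js k)))) (trename sg (args k)))
                 (map (fun k => Eqf (var (rep (cls (js k)))) (trename sg (args k))) (fin_list _))).
      { apply in_map_iff. exists k. split; [reflexivity|apply fin_list_In]. }
      exact (Hs _ (or_intror I)).
Qed.

Lemma truth (phi : formula L) : forall sg : nat -> nat,
  sat TM (fun i => cls (sg i)) phi <-> Gam (frename sg phi).
Proof.
  induction phi as [t1 t2|r args| |p IHp q IHq|p IHp]; intros sg.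
  - simpl. destruct (term_lemma t1 sg) as [j1 [E1 G1]]. destruct (term_lemma t2 sg) as [j2 [E2 G2]].
    rewrite E1, E2, cls_eq. unfold Geq. split; intro H.
    + apply (Gam_closed [Eqf (var j1) (var j2); Eqf (var j1) (trename sg t1); Eqf (var j2) (trename sg t2)]).
      * intros x [<-|[<-|[<-|[]]]]; auto.
      * intros M s _ Hs. pose proof (Hs _ (or_introl eq_refl)). pose proof (Hs _ (or_intror (or_introl eq_refl))).
        pose proof (Hs _ (or_intror (or_intror (or_introl eq_refl)))). simpl in *. congruence.
    + apply (Gam_closed [Eqf (trename sg t1) (trename sg t2); Eqf (var j1) (trename sg t1); Eqf (var j2) (trename sg t2)]).
      * intros x [<-|[<-|[<-|[]]]]; auto.
      * intros M s _ Hs. pose proof (Hs _ (or_introl eq_refl)). pose proof (Hs _ (or_intror (or_introl eq_refl))).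
        pose proof (Hs _ (or_intror (or_intror (or_introl eq_refl)))). simpl in *. congruence.
  - simpl.
    destruct (choice (fun k j => teval TM (fun i => cls (sg i)) (args k) = cls j /\
        Gam (Eqf (var j) (trename sg (args k))))) as [js Hjs]; [intro k; apply term_lemma|].
    assert (E : (fun j => teval TM (fun i => cls (sg i)) (args j)) = (fun k => cls (js k))).
    { apply functional_extensionality; intro k; apply Hjs. }
    rewrite E. unfold rint. simpl.
    set (eqs := map (fun k => Eqf (var (rep (cls (js k)))) (trename sg (args k))) (fin_list (rarity L r))).
    assert (Heqs : forall x, In x eqs -> Gam x).
    { intros x Hx. apply In_fin_map in Hx as [k ->].
      apply (Gam_closed [Eqf (var (rep (cls (js k)))) (var (js k)); Eqf (var (js k)) (trename sg (args k))]).
      * intros x [<-|[<-|[]]]; [apply Geq_rep|apply Hjs].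
      * intros M s _ Hs. pose proof (Hs _ (or_introl eq_refl)). pose proof (Hs _ (or_intror (or_introl eq_refl))).
        simpl in *. congruence. }
    assert (Hval : forall (M : structure L) (s : nat -> M), (forall x, In x eqs -> sat M s x) ->
              (fun k => s (rep (cls (js k)))) = (fun k => teval M s (trename sg (args k)))).
    { intros M s Hs. apply functional_extensionality. intro k.
      assert (I : In (Eqf (var (rep (cls (js k)))) (trename sg (args k))) eqs).
      { apply in_map_iff. exists k. split; [reflexivity|apply fin_list_In]. }
      exact (Hs _ I). }
    split; intro H.
    + apply (Gam_closed (Relf r (fun k => var (rep (cls (js k)))) :: eqs)).
      * intros x [<-|Hx]; auto.
      * intros M s _ Hs. pose proof (Hs _ (or_introl eq_refl)) as H0. simpl in *.
        rewrite <- Hval; auto.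
    + apply (Gam_closed (Relf r (fun k => trename sg (args k)) :: eqs)).
      * intros x [<-|Hx]; auto.
      * intros M s _ Hs. pose proof (Hs _ (or_introl eq_refl)) as H0. simpl in *.
        rewrite Hval; auto.
  - simpl. split; [tauto|]. apply Gam_Fls.
  - simpl. rewrite Gam_imp, IHp, IHq. tauto.
  - simpl. rewrite Gam_all. split; intros H j.
    + rewrite frename_comp.
      assert (E : (fun v => scons j (fun v => v) (uprn sg v)) = scons j sg)
        by (apply functional_extensionality; intros [|v]; reflexivity).
      rewrite E. apply IHp.
      assert (E2 : (fun i => cls (scons j sg i)) = scons (cls j) (fun i => cls (sg i)))
        by (apply functional_extensionality; intros [|v]; reflexivity).
      rewrite E2. apply H.
          + rename j into m. rewrite <- (cls_rep m).
      assert (E2 : scons (cls (rep m)) (fun i => cls (sg i)) = (fun i => cls (scons (rep m) sg i)))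
        by (apply functional_extensionality; intros [|v]; reflexivity).
      simpl. rewrite E2. apply IHp. specialize (H (rep m)). rewrite frename_comp in H.
      assert (E : (fun v => scons (rep m) (fun v => v) (uprn sg v)) = scons (rep m) sg)
        by (apply functional_extensionality; intros [|v]; reflexivity).
      rewrite E in H. exact H.
Qed.

Lemma TM_model : model T TM.
Proof.
  intros sg0 Hsg s.
  assert (E : s = (fun i => cls (rep (s i)))) by (apply functional_extensionality; intro; rewrite cls_rep; auto).
  rewrite E. apply truth. apply (Gam_closed []). { intros _ []. }
  intros M s' HM _. apply sat_rename. apply HM. auto.
Qed.

Lemma TM_sig : forall phi, Sig phi -> sat TM (fun i => cls (dbl i)) phi.
Proof.
  intros phi H. apply truth. left. exists phi. auto.
Qed.

End Henkin.

Theorem compactness {L : language} (HL : countable_language L) (T : theory L) (Sig : formula L -> Prop) :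
  (forall l, (forall psi, In psi l -> Sig psi) -> satl T l) ->
  exists (M : structure L) (s : nat -> M), model T M /\ forall psi, Sig psi -> sat M s psi.
Proof.
  intro F. destruct HL as [[fF HfF] [fR HfR]].
  set (en := enum fF fR).
  assert (Hs : forall phi, exists n, en n = phi).
  { intro phi. exists (code_f fF fR phi). apply enum_surj; auto. }
  exists (TM T en Sig), (fun i => cls T en Sig (dbl i)). split.
  - apply (TM_model T en Hs Sig F).
  - apply (TM_sig T en Hs Sig F).
Qed.


Section Ext.
Context {L : language} (Phi : nat -> formula L) (HPhi : seq_ok Phi) (Hrich : rich Phi).

Definition rhok (k v : nat) : nat := if Nat.eqb v k then 0 else S v.
Definition Dform (k : nat) : formula L := All (Imp (frename (rhok k) (Phi k)) (frename S (Phi k))).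
Definition cond (M : structure L) (k : nat) (x : nat -> M) : Prop :=
  forall y, sat M (upd x k y) (Phi k) -> sat M x (Phi k).

Lemma upd_rhok (M : structure L) (x : nat -> M) k m :
  (fun v => scons m x (rhok k v)) = upd x k m.
Proof.
  apply functional_extensionality; intro v. unfold rhok, upd. destruct (Nat.eqb v k); auto.
Qed.

Lemma sat_upd_rhok (M : structure L) (x : nat -> M) k m phi :
  sat M (scons m x) (frename (rhok k) phi) <-> sat M (upd x k m) phi.
Proof. rewrite sat_rename, upd_rhok. tauto. Qed.

Lemma sat_shift (M : structure L) (x : nat -> M) m phi :
  sat M (scons m x) (frename S phi) <-> sat M x phi.
Proof. rewrite sat_rename. simpl. tauto. Qed.

Lemma Dform_sat (M : structure L) x k : sat M x (Dform k) <-> cond M k x.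
Proof.
  unfold Dform, cond. simpl. split; intros H y; specialize (H y);
  rewrite sat_upd_rhok, sat_shift in *; auto.
Qed.

Lemma DPhi_iff (M : structure L) a : DPhi Phi M a <-> forall k, sat M a (Dform k).
Proof. unfold DPhi. split; intros H k.
  - apply (proj2 (Dform_sat M a k)). exact (H k).
  - exact (proj1 (Dform_sat M a k) (H k)). Qed.

Lemma cond_coinc (M : structure L) k (x x' : nat -> M) :
  (forall v, v <= k -> x v = x' v) -> (cond M k x <-> cond M k x').
Proof.
  intro H. unfold cond.
  assert (E1 : sat M x (Phi k) <-> sat M x' (Phi k)).
  { apply (sat_coinc M _ (S k)); [apply HPhi|]. intros; apply H; lia. }
  assert (E2 : forall y, sat M (upd x k y) (Phi k) <-> sat M (upd x' k y) (Phi k)).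
  { intro y. apply (sat_coinc M _ (S k)); [apply HPhi|]. intros v Hv. unfold upd.
    destruct (Nat.eqb v k); auto. apply H; lia. }
  split; intros C y Hy; [apply E1; apply (C y); apply E2|apply E1; apply (C y); apply E2]; auto.
Qed.

Definition TVC (M : structure L) (Sx : M -> Prop) : Prop :=
  forall (psi : formula L) (s : nat -> M), (forall v, Sx (s v)) ->
    (exists y, sat M (scons y s) psi) -> exists y, Sx y /\ sat M (scons y s) psi.

Fixpoint maxto (K : nat) (f : nat -> nat) : nat :=
  match K with 0 => 0 | S K => Nat.max (f K) (maxto K f) end.

Lemma maxto_ge K f v : v < K -> f v <= maxto K f.
Proof. induction K; simpl; intros; [lia|]. destruct (Nat.eq_dec v K); subst; [lia|]. specialize (IHK ltac:(lia)); lia. Qed.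

Lemma TVC_entries (M : structure L) (c : nat -> M) :
  DPhi Phi M c -> TVC M (fun m => exists i, c i = m).
Proof.
  intros Hc psi s Hs [y0 Hy0].
  destruct (choice (fun v i => c i = s v) Hs) as [idx Hidx].
  set (K := ffv psi). set (B := S (maxto K idx)).
  set (rho := fun v => match v with 0 => B | S w => idx w end).
  assert (Hf : ffvb (S B) (frename rho psi)).
  { apply (ffvb_rename psi K); [apply ffv_ok|]. intros [|w] Hw; simpl; [lia|].
    pose proof (maxto_ge K idx w ltac:(lia)). unfold B. lia. }
  destruct (Hrich B _ Hf) as [n [HBn Hn]].
  assert (Key : forall y, sat M (upd c n y) (Phi n) <-> sat M (scons y s) psi).
  { intro y. rewrite Hn, !sat_rename. apply (sat_coinc M psi K); [apply ffv_ok|].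
    intros [|w] Hw; simpl.
    - unfold move_var. rewrite Nat.eqb_refl. unfold upd. rewrite Nat.eqb_refl. auto.
    - pose proof (maxto_ge K idx w ltac:(lia)).
      unfold move_var. destruct (Nat.eqb_spec (idx w) B); [unfold B in *; lia|].
      unfold upd. destruct (Nat.eqb_spec (idx w) n); [unfold B in *; lia|]. auto. }
  exists (c n). split; [eauto|].
  apply Key. assert (E : upd c n (c n) = c).
  { apply functional_extensionality; intro v; unfold upd. destruct (Nat.eqb_spec v n); subst; auto. }
  rewrite E. apply (Hc n y0). apply Key. auto.
Qed.

Lemma TVC_all (M : structure L) : TVC M (fun _ => True).
Proof. intros psi s _ [y H]. eauto. Qed.

Lemma WC_of_TVC (M : structure L) (Sx : M -> Prop) d : TVC M Sx -> Sx d ->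
  forall k (x : nat -> M), (forall i, i < k -> Sx (x i)) -> (exists y, sat M (upd x k y) (Phi k)) ->
  exists y, Sx y /\ sat M (upd x k y) (Phi k).
Proof.
  intros HT Hd k x Hx [y0 Hy0].
  set (x' := fun v => if Nat.ltb v k then x v else d).
  assert (E : forall y, sat M (upd x k y) (Phi k) <-> sat M (scons y x') (frename (rhok k) (Phi k))).
  { intro y. rewrite sat_upd_rhok. apply (sat_coinc M _ (S k)); [apply HPhi|].
    intros v Hv. unfold upd, x'. destruct (Nat.eqb_spec v k); auto.
    destruct (Nat.ltb_spec v k); auto; lia. }
  destruct (HT (frename (rhok k) (Phi k)) x') as [y [Sy Hy]].
  { intro v. unfold x'. destruct (Nat.ltb_spec v k); auto. }
  { exists y0. apply E. auto. }
  exists y. split; auto. apply E; auto.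
Qed.

Lemma trivial_pos K : exists k, K <= k /\ Phi k = Eqf (var k) (var k).
Proof.
  destruct (Hrich K (Eqf (var K) (var K))) as [k [Hk E]].
  { simpl. lia. }
  exists k. split; auto. rewrite E. simpl. unfold move_var. rewrite Nat.eqb_refl. auto.
Qed.

Section Construction.
Context (M : structure L) (Sx : M -> Prop)
  (HWC : forall k (x : nat -> M), (forall i, i < k -> Sx (x i)) -> (exists y, sat M (upd x k y) (Phi k)) ->
      exists y, Sx y /\ sat M (upd x k y) (Phi k))
  (n : nat) (p e : nat -> M) (He : forall i, Sx (e i)) (Hp : forall i, i < n -> Sx (p i))
  (Hpc : forall k, k < n -> cond M k p).

Definition step (k : nat) (x : nat -> M) (c : nat) : M * nat :=
  if Nat.ltb k n then (p k, c)
  else if excluded_middle_informative ((exists y, sat M (upd x k y) (Phi k)) /\ ~ sat M (upd x k (e c)) (Phi k))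
       then (epsilon (inhabits (e 0)) (fun y => Sx y /\ sat M (upd x k y) (Phi k)), c)
       else (e c, S c).

Fixpoint F (k : nat) : (nat -> M) * nat :=
  match k with
  | 0 => (fun _ => e 0, 0)
  | S k => (upd (fst (F k)) k (fst (step k (fst (F k)) (snd (F k)))), snd (step k (fst (F k)) (snd (F k))))
  end.

Definition X k := fst (F k).
Definition C k := snd (F k).
Definition val k := fst (step k (X k) (C k)).
Definition aseq (i : nat) : M := X (S i) i.

Lemma X_S k : X (S k) = upd (X k) k (val k).
Proof. reflexivity. Qed.
Lemma C_S k : C (S k) = snd (step k (X k) (C k)).
Proof. reflexivity. Qed.

Lemma X_stable i k k' : i < k -> k <= k' -> X k' i = X k i.
Proof.
  intros H1 H2. induction H2; auto. rewrite X_S. unfold upd.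
  destruct (Nat.eqb_spec i m); [lia|auto].
Qed.

Lemma X_aseq i k : i < k -> X k i = aseq i.
Proof. intro H. unfold aseq. apply X_stable; lia. Qed.

Lemma aseq_val k : aseq k = val k.
Proof. unfold aseq. rewrite X_S. unfold upd. rewrite Nat.eqb_refl. auto. Qed.

Lemma aseq_prefix i : i < n -> aseq i = p i.
Proof.
  intro H. rewrite aseq_val. unfold val, step. destruct (Nat.ltb_spec i n); [auto|lia].
Qed.

Lemma X_in k : forall i, i < k -> Sx (X k i).
Proof.
  induction k; intros i Hi; [lia|].
  rewrite X_S. unfold upd. destruct (Nat.eqb_spec i k); [subst|apply IHk; lia].
  unfold val, step. destruct (Nat.ltb_spec k n); [apply Hp; auto|].
  destruct excluded_middle_informative as [[Hex _]|_]; simpl; auto.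
  apply (epsilon_spec (inhabits (e 0)) (fun y => Sx y /\ sat M (upd (X k) k y) (Phi k))).
  apply HWC; auto.
Qed.

Lemma aseq_in i : Sx (aseq i).
Proof. unfold aseq. apply X_in. lia. Qed.

Lemma aseq_cond k : cond M k aseq.
Proof.
  apply (cond_coinc M k _ (X (S k))). { intros v Hv. symmetry. apply X_aseq. lia. }
  rewrite X_S. unfold val, step.
  destruct (Nat.ltb_spec k n).
  - apply (cond_coinc M k _ p); [|apply Hpc; auto].
    intros v Hv. unfold upd. destruct (Nat.eqb_spec v k); subst; simpl; auto.
    rewrite X_aseq by lia. apply aseq_prefix. lia.
  - destruct excluded_middle_informative as [[Hex _]|Hn]; simpl.
    + intros y _.
      apply (epsilon_spec (inhabits (e 0)) (fun y => Sx y /\ sat M (upd (X k) k y) (Phi k))).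
      apply HWC; auto. apply X_in.
    + intros y Hy.
      assert (E : upd (upd (X k) k (e (C k))) k y = upd (X k) k y).
      { apply functional_extensionality; intro v; unfold upd. destruct (Nat.eqb v k); auto. }
      rewrite E in Hy. apply NNPP. intro N. apply Hn. split; eauto.
Qed.

Lemma C_step k : (C (S k) = C k) \/ (C (S k) = S (C k) /\ val k = e (C k)).
Proof.
  rewrite C_S. unfold val, step. destruct (Nat.ltb_spec k n); simpl; auto.
  destruct excluded_middle_informative; simpl; auto.
Qed.

Lemma C_triv k : n <= k -> Phi k = Eqf (var k) (var k) -> C (S k) = S (C k).
Proof.
  intros H1 H2. rewrite C_S. unfold step. destruct (Nat.ltb_spec k n); [lia|].
  destruct excluded_middle_informative as [[_ N]|_]; simpl; auto.
  exfalso. apply N. rewrite H2. simpl. auto.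
Qed.

Lemma C_mono k k' : k <= k' -> C k <= C k'.
Proof. induction 1; auto. destruct (C_step m) as [E|[E _]]; lia. Qed.

Lemma C_unbounded c : exists k, c < C k.
Proof.
  induction c.
  - destruct (trivial_pos n) as [k [H1 H2]]. exists (S k). rewrite C_triv; auto. lia.
  - destruct IHc as [k0 Hk0]. destruct (trivial_pos (n + k0)) as [k [H1 H2]].
    exists (S k). rewrite C_triv; [|lia|auto]. pose proof (C_mono k0 k ltac:(lia)). lia.
Qed.

Lemma C_hit c : exists k, C k = c /\ C (S k) = S c.
Proof.
  destruct (C_unbounded c) as [k Hk]. induction k.
  - simpl in Hk. unfold C in Hk. simpl in Hk. lia.
  - destruct (Nat.lt_ge_cases c (C k)) as [H|H]; auto.
    exists k. destruct (C_step k) as [E|[E _]]; lia.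
Qed.

Lemma aseq_cover j : exists i, aseq i = e j.
Proof.
  destruct (C_hit j) as [k [H1 H2]]. exists k. rewrite aseq_val.
  destruct (C_step k) as [E|[E V]]; [lia|]. rewrite V, H1. auto.
Qed.

End Construction.

Lemma ext_exists (M : structure L) (Sx : M -> Prop)
  (HWC : forall k (x : nat -> M), (forall i, i < k -> Sx (x i)) -> (exists y, sat M (upd x k y) (Phi k)) ->
      exists y, Sx y /\ sat M (upd x k y) (Phi k))
  (n : nat) (p e : nat -> M) (He : forall i, Sx (e i)) (Hp : forall i, i < n -> Sx (p i))
  (Hpc : forall k, k < n -> cond M k p) :
  exists a, (forall i, i < n -> a i = p i) /\ DPhi Phi M a /\ (forall i, Sx (a i)) /\
    (forall j, exists i, a i = e j).
Proof.
  exists (aseq M Sx n p e). split; [|split; [|split]].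
  - intros; apply aseq_prefix; auto.
  - intro k. apply aseq_cond; auto.
  - intro i. apply aseq_in; auto.
  - intro j. apply aseq_cover; auto.
Qed.

Lemma same_entries_refl {X} (a : nat -> X) : same_entries a a.
Proof. split; intro i; exists i; auto. Qed.
Lemma same_entries_sym {X} (a b : nat -> X) : same_entries a b -> same_entries b a.
Proof. intros [H1 H2]. split; auto. Qed.
Lemma same_entries_trans {X} (a b c : nat -> X) : same_entries a b -> same_entries b c -> same_entries a c.
Proof.
  intros [H1 H2] [H3 H4]. split.
  - intro i. destruct (H1 i) as [j Hj]. destruct (H3 j) as [k Hk]. exists k; congruence.
  - intro i. destruct (H4 i) as [j Hj]. destruct (H2 j) as [k Hk]. exists k; congruence.
Qed.

Lemma DPhi_cond (M : structure L) a : DPhi Phi M a -> forall k, cond M k a.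
Proof. intros H k. exact (H k). Qed.

Lemma extend_any (M : structure L) n (p e : nat -> M) :
  (forall k, k < n -> cond M k p) ->
  exists a, (forall i, i < n -> a i = p i) /\ DPhi Phi M a /\ (forall j, exists i, a i = e j).
Proof.
  intro Hpc. destruct (ext_exists M (fun _ => True)) with (n := n) (p := p) (e := e)
    as [a [H1 [H2 [_ H4]]]]; auto.
  intros k x _ [y Hy]; eauto.
  exists a; auto.
Qed.

Lemma extend_entries (M : structure L) (c : nat -> M) n (p : nat -> M) :
  DPhi Phi M c -> (forall i, i < n -> exists j, c j = p i) -> (forall k, k < n -> cond M k p) ->
  exists a, (forall i, i < n -> a i = p i) /\ DPhi Phi M a /\ same_entries a c.
Proof.
  intros Hc Hin Hpc.
  destruct (ext_exists M (fun m => exists i, c i = m)) with (n := n) (p := p) (e := c)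
    as [a [H1 [H2 [H3 H4]]]]; eauto.
  - intros k x Hx Hex. apply (WC_of_TVC M _ (c 0)); eauto. apply TVC_entries; auto.
  - exists a. split; auto. split; auto. split.
    + intro i. destruct (H3 i) as [j Hj]. exists j; auto.
    + intro j. destruct (H4 j) as [i Hi]. exists i; auto.
Qed.

Lemma extend3 (M : structure L) (a b c : nat -> M) n :
  DPhi Phi M a -> DPhi Phi M b -> DPhi Phi M c ->
  exists a' b' c', DPhi Phi M a' /\ DPhi Phi M b' /\ DPhi Phi M c' /\
    same_entries a' b' /\ same_entries b' c' /\
    (forall i, i < n -> a' i = a i /\ b' i = b i /\ c' i = c i).
Proof.
  intros Ha Hb Hc.
  destruct (extend_any M 0 a (pr a (pr b c))) as [c0 [_ [H0 Hcov]]]. { intros; lia. }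
  destruct (extend_entries M c0 n a H0) as [a' [A1 [A2 A3]]].
  { intros i _. destruct (Hcov (2 * i)) as [j Hj]. rewrite pr_even in Hj. eauto. }
  { intros k _; exact (Ha k). }
  destruct (extend_entries M c0 n b H0) as [b' [B1 [B2 B3]]].
  { intros i _. destruct (Hcov (2 * (2 * i) + 1)) as [j Hj]. rewrite pr_odd, pr_even in Hj. eauto. }
  { intros k _; exact (Hb k). }
  destruct (extend_entries M c0 n c H0) as [c' [C1 [C2 C3]]].
  { intros i _. destruct (Hcov (2 * (2 * i + 1) + 1)) as [j Hj]. rewrite !pr_odd in Hj. eauto. }
  { intros k _; exact (Hc k). }
  exists a', b', c'. split; [auto|split; [auto|split; [auto|split; [|split]]]].
  - eapply same_entries_trans; [eassumption|apply same_entries_sym; eassumption].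
  - eapply same_entries_trans; [eassumption|apply same_entries_sym; eassumption].
  - intros i Hi. auto.
Qed.

End Ext.


Section Parts.
Context {L : language} (T : theory L) (Phi : nat -> formula L) (HPhi : seq_ok Phi) (Hrich : rich Phi).

Lemma pr_dbl {X} (a b : nat -> X) : (fun v => pr a b (2 * v)) = a.
Proof. apply functional_extensionality; intro; apply pr_even. Qed.

Lemma sat_rename_eq (M : structure L) (s s' : nat -> M) rho phi :
  (forall v, s (rho v) = s' v) -> (sat M s (frename rho phi) <-> sat M s' phi).
Proof.
  intro H. rewrite sat_rename.
  assert (E : (fun v => s (rho v)) = s') by (apply functional_extensionality; auto).
  rewrite E. tauto.
Qed.

Lemma tp_of_tp2 (M M' : structure L) a b a' b' :
  eqty (tp2 M a b) (tp2 M' a' b') -> eqty (tp M a) (tp M' a').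
Proof.
  intros H phi. unfold tp2, tp in *. specialize (H (frename (fun v => 2 * v) phi)).
  rewrite (sat_rename_eq M (pr a b) a) in H by (intro; apply pr_even).
  rewrite (sat_rename_eq M' (pr a' b') a') in H by (intro; apply pr_even). exact H.
Qed.

Lemma tp_transport (M M' : structure L) a a' rho phi :
  eqty (tp M a) (tp M' a') -> (sat M (fun v => a (rho v)) phi <-> sat M' (fun v => a' (rho v)) phi).
Proof.
  intro H. rewrite <- (sat_rename M), <- (sat_rename M'). apply H.
Qed.

Lemma pr_comp {X} (a : nat -> X) s t : pr (fun i => a (s i)) (fun i => a (t i)) = (fun v => a (pr s t v)).
Proof. apply functional_extensionality; intro v. unfold pr. destruct (Nat.even v); auto. Qed.

Lemma pr_comp_id {X} (a : nat -> X) t : pr a (fun i => a (t i)) = (fun v => a (pr (fun i => i) t v)).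
Proof. apply functional_extensionality; intro v. unfold pr. destruct (Nat.even v); auto. Qed.

Lemma eq_transport (M M' : structure L) a a' i j :
  eqty (tp M a) (tp M' a') -> (a i = a j <-> a' i = a' j).
Proof. intro H. exact (H (Eqf (var i) (var j))). Qed.

Lemma DPhi_transport (M M' : structure L) a a' sg :
  eqty (tp M a) (tp M' a') -> DPhi Phi M (fun i => a (sg i)) -> DPhi Phi M' (fun i => a' (sg i)).
Proof.
  intros H D. apply (proj2 (DPhi_iff Phi M' _)). intro k.
  apply (proj1 (tp_transport M M' a a' sg (Dform Phi k) H)).
  exact (proj1 (DPhi_iff Phi M _) D k).
Qed.

Lemma entries_fun {X} (a b : nat -> X) : same_entries a b -> exists sg, b = fun i => a (sg i).
Proof.
  intros [_ H]. destruct (choice (fun j i => b j = a i) H) as [sg Hsg].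
  exists sg. apply functional_extensionality; auto.
Qed.

Lemma transport_seq (M M' : structure L) a b a' b' sg :
  eqty (tp2 M a b) (tp2 M' a' b') -> b = (fun i => a (sg i)) -> b' = (fun i => a' (sg i)).
Proof.
  intros H Hb. apply functional_extensionality. intro i.
  specialize (H (Eqf (var (2 * i + 1)) (var (2 * sg i)))). unfold tp2, tp in H. cbn [sat teval] in H.
  rewrite !pr_odd, !pr_even in H. apply H. rewrite Hb. auto.
Qed.

Lemma Gset_of (M : structure L) a b : Gpair T Phi M a b -> Gset T Phi (tp2 M a b).
Proof. intro H. exists M, a, b. split; auto. intro; tauto. Qed.

Lemma coinc_pr (M : structure L) (a b a' b' : nat -> M) N phi :
  (forall i, i < N -> a i = a' i /\ b i = b' i) -> ffvb (2 * N) phi ->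
  (sat M (pr a b) phi <-> sat M (pr a' b') phi).
Proof.
  intros H Hf. apply (sat_coinc M phi (2 * N)); auto. intros v Hv.
  destruct (even_or_odd v) as [i [-> | ->]]; rewrite ?pr_even, ?pr_odd; apply H; lia.
Qed.

Lemma ffv_ok2 (phi : formula L) N : ffv phi <= N -> ffvb (2 * N) phi.
Proof. intro. apply (ffvb_mono phi (ffv phi)); [lia|apply ffv_ok]. Qed.


Lemma part1 E : def_equiv T Phi E -> Hcal T Phi (bracket T Phi E).
Proof.
  intro HE. split; [split|split].
  - split.
    + intros p [G _]; auto.
    + intros p [G Hp]. exists E. split; auto. intros q Gq Hq. split; auto.
  - split.
    + intros p [G _]; auto.
    + intros p [G Hp]. exists (Imp E Fls). split.
      * destruct G as [M [a [b [Gp Heq]]]]. apply Heq. simpl. intro HE'. apply Hp. split.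
        { exists M, a, b; auto. } apply Heq. auto.
      * intros q Gq Hq. split; auto. intros [_ HqE].
        destruct Gq as [M [a [b [Gp Heq]]]]. apply Heq in Hq. apply Heq in HqE. unfold tp2, tp in *. simpl in Hq. exact (Hq HqE).
  - intro k. split.
    + intros [Gk Hk]. destruct Gk as [M [a [b [Gp Heq]]]].
      exists M, a, b, b. destruct Gp as [HM [Da [Db Se]]].
      assert (Gab : Gpair T Phi M a b) by (split; [auto|split; [auto|split; auto]]).
      assert (Gbb : Gpair T Phi M b b) by (split; [auto|split; [auto|split; [auto|apply same_entries_refl]]]).
      split; [exact Gab|]. split; [exact Gbb|].
      split; [split; [apply Gset_of; auto|apply Heq; auto]|].
      split; [split; [apply Gset_of; auto|]|auto].
      unfold tp2, tp. apply (proj1 (HE M HM)); auto.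
    + intros [M [a [b [c [Gab [Gcb [[_ Hab] [[_ Hcb] Heq]]]]]]]].
      destruct Gab as [HM [Da [Db Sab]]]. destruct Gcb as [_ [Dc [_ Scb]]].
      split.
      * exists M, a, c. split; auto. split; [auto|split; [auto|split; [auto|]]].
        eapply same_entries_trans; [eauto|apply same_entries_sym; auto].
      * apply Heq. unfold tp2, tp in *.
        destruct (HE M HM) as [_ [Hs Ht]]. apply (Ht a b c); auto.
  - intros p [M [a [HM [Da Heq]]]]. split.
    + exists M, a, a. split; [|auto]. split; [auto|split; [auto|split; [auto|apply same_entries_refl]]].
    + apply Heq. apply (proj1 (HE M HM)); auto.
Qed.

Lemma part2 E E' : def_equiv T Phi E -> def_equiv T Phi E' ->
  (forall p, bracket T Phi E p <-> bracket T Phi E' p) -> agree_on_D T Phi E E'.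
Proof.
  intros HE HE' Hb M HM a b Da Db.
  set (N := ffv E + ffv E').
  destruct (extend3 Phi HPhi Hrich M a b b N Da Db Db) as [a' [b' [c' [Da' [Db' [Dc' [Sab [Sbc Hpre]]]]]]]].
  assert (Hp : forall i, i < N -> a i = a' i /\ b i = b' i).
  { intros i Hi. destruct (Hpre i Hi) as [H1 [H2 _]]. auto. }
  rewrite (coinc_pr M a b a' b' N E Hp) by (apply ffv_ok2; unfold N; lia).
  rewrite (coinc_pr M a b a' b' N E' Hp) by (apply ffv_ok2; unfold N; lia).
  assert (G : Gpair T Phi M a' b') by (split; [auto|split; [auto|split; auto]]).
  split; intro H.
  - destruct (proj1 (Hb (tp2 M a' b')) (conj (Gset_of M a' b' G) H)) as [_ H']. exact H'.
  - destruct (proj2 (Hb (tp2 M a' b')) (conj (Gset_of M a' b' G) H)) as [_ H']. exact H'.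
Qed.


Lemma coset_sub E (HE : def_equiv T Phi E) (M : structure L) (a b b' : nat -> M) :
  Gpair T Phi M a b -> Gpair T Phi M a b' -> sat M (pr b b') E ->
  forall k, coset T Phi (tp2 M a b) (bracket T Phi E) k -> coset T Phi (tp2 M a b') (bracket T Phi E) k.
Proof.
  intros Gab Gab' Hbb' k [M1 [a1 [b1 [c1 [G1 [G2 [Heq1 [[_ Hbc] Heqk]]]]]]]].
  destruct Gab as [HM [Da [Db Sab]]]. destruct Gab' as [_ [_ [Db' Sab']]].
  destruct (entries_fun a b Sab) as [sg Hsg]. destruct (entries_fun a b' Sab') as [sg' Hsg'].
  subst b b'.
  pose proof (tp_of_tp2 M M1 a _ a1 b1 Heq1) as Htp.
  pose proof (transport_seq M M1 a _ a1 b1 sg Heq1 eq_refl) as Hb1. subst b1.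
  set (b2 := fun i => a1 (sg' i)).
  destruct G1 as [HM1 [Da1 [Db1 S1]]]. destruct G2 as [_ [_ [Dc1 S2]]].
  assert (Db2 : DPhi Phi M1 b2) by (apply (DPhi_transport M M1 a a1 sg' Htp Db')).
  assert (S12 : same_entries a1 b2).
  { split.
    - intro i. destruct (proj1 Sab' i) as [j Hj]. exists j. unfold b2.
      apply (eq_transport M M1 a a1 i (sg' j) Htp). auto.
    - intro j. exists (sg' j). reflexivity. }
  exists M1, a1, b2, c1.
  split; [split; [auto|split; [auto|split; auto]]|].
  split; [split; [auto|split; [auto|split; [auto|]]]|].
  { eapply same_entries_trans; [apply same_entries_sym; exact S12|].
    eapply same_entries_trans; [exact S1|exact S2]. }
  split.
  { intro phi. unfold tp2, tp, b2. rewrite !pr_comp_id. apply tp_transport; auto. }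
  split; [|exact Heqk].
  split.
  - apply Gset_of. split; [auto|split; [auto|split; [auto|]]].
    eapply same_entries_trans; [apply same_entries_sym; exact S12|].
    eapply same_entries_trans; [exact S1|exact S2].
  - unfold tp2, tp in *. destruct (HE M1 HM1) as [_ [Hsy Htr]].
    apply (Htr b2 (fun i => a1 (sg i)) c1); auto.
    unfold b2. rewrite pr_comp. apply (proj1 (tp_transport M M1 a a1 (pr sg' sg) E Htp)).
    rewrite <- pr_comp. destruct (HE M HM) as [_ [Hsy0 _]]. apply Hsy0; auto.
Qed.

Lemma coset_self E (HE : def_equiv T Phi E) (M : structure L) (a b : nat -> M) :
  Gpair T Phi M a b -> coset T Phi (tp2 M a b) (bracket T Phi E) (tp2 M a b).
Proof.
  intro G. destruct G as [HM [Da [Db S]]].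
  exists M, a, b, b. split; [split; [auto|split; [auto|split; auto]]|].
  split; [split; [auto|split; [auto|split; [auto|apply same_entries_refl]]]|].
  split; [intro; tauto|]. split; [|intro; tauto].
  split. { apply Gset_of. split; [auto|split; [auto|split; [auto|apply same_entries_refl]]]. }
  unfold tp2, tp. apply (proj1 (HE M HM)); auto.
Qed.

Lemma part4_1 E (HE : def_equiv T Phi E) (M : structure L) (a b b' : nat -> M) :
  Gpair T Phi M a b -> Gpair T Phi M a b' ->
  ((forall k, coset T Phi (tp2 M a b) (bracket T Phi E) k <-> coset T Phi (tp2 M a b') (bracket T Phi E) k)
   <-> sat M (pr b b') E).
Proof.
  intros Gab Gab'. split.
  - intro H. pose proof (proj2 (H _) (coset_self E HE M a b' Gab')) as C.
    destruct C as [M1 [a1 [b1 [c1 [G1 [G2 [Heq1 [[_ Hbc] Heqk]]]]]]]].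
    destruct Gab as [HM [Da [Db Sab]]]. destruct Gab' as [_ [_ [Db' Sab']]].
    destruct (entries_fun a b Sab) as [sg Hsg]. destruct (entries_fun a b' Sab') as [sg' Hsg'].
    subst b b'.
    pose proof (tp_of_tp2 M M1 a _ a1 b1 Heq1) as Htp.
    pose proof (transport_seq M M1 a _ a1 b1 sg Heq1 eq_refl) as Hb1. subst b1.
    assert (Heqk' : eqty (tp2 M a (fun i => a (sg' i))) (tp2 M1 a1 c1)).
    { intro phi. split; intro X; [apply Heqk; auto|apply Heqk; auto]. }
    pose proof (transport_seq M M1 a _ a1 c1 sg' Heqk' eq_refl) as Hc1. subst c1.
    unfold tp2, tp in Hbc. rewrite pr_comp in Hbc. rewrite pr_comp.
    apply (proj2 (tp_transport M M1 a a1 (pr sg sg') E Htp)). auto.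
  - intro H. intro k. split.
    + apply coset_sub; auto.
    + apply coset_sub; auto. destruct Gab as [HM [Da [Db _]]]. destruct Gab' as [_ [_ [Db' _]]].
      destruct (HE M HM) as [_ [Hsy _]]. apply Hsy; auto.
Qed.

Lemma coset_eqty (g g' : ty L) H k : eqty g g' -> coset T Phi g H k -> coset T Phi g' H k.
Proof.
  intros E [M1 [a1 [b1 [c1 [G1 [G2 [Heq1 R]]]]]]].
  exists M1, a1, b1, c1. split; auto. split; auto. split; auto.
  intro phi. split; intro X; [apply Heq1; apply E; auto|apply E; apply Heq1; auto].
Qed.

Lemma part4_2 E (M : structure L) (a : nat -> M) :
  model T M -> DPhi Phi M a ->
  forall C, eGmodH T Phi (tp M a) (bracket T Phi E) C ->
    exists b : nat -> M, Gpair T Phi M a b /\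
      (forall k, C k <-> coset T Phi (tp2 M a b) (bracket T Phi E) k).
Proof.
  intros HM Da C [M1 [a1 [b1 [G1 [Htp1 HC]]]]].
  destruct G1 as [HM1 [Da1 [Db1 S1]]].
  destruct (entries_fun a1 b1 S1) as [sg Hsg]. subst b1.
  assert (Htp : eqty (tp M1 a1) (tp M a)) by exact Htp1.
  assert (Htp' : eqty (tp M a) (tp M1 a1)) by (intro; split; apply Htp).
  exists (fun i => a (sg i)). split.
  - split; [auto|split; [auto|split]].
    + apply (DPhi_transport M1 M a1 a sg Htp Db1).
    + split.
      * intro i. destruct (proj1 S1 i) as [j Hj]. exists j.
        apply (eq_transport M1 M a1 a i (sg j) Htp). auto.
      * intro j. exists (sg j). reflexivity.
  - intro k. rewrite HC. split; apply coset_eqty; intro phi; unfold tp2, tp; rewrite !pr_comp_id;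
      [apply tp_transport; auto|apply tp_transport; auto].
Qed.

Lemma part4_3 E (HE : def_equiv T Phi E) (M : structure L) (a : nat -> M) :
  model T M -> DPhi Phi M a -> (forall m : M, exists i, a i = m) ->
  forall b' : nat -> M, DPhi Phi M b' ->
    exists b : nat -> M, Gpair T Phi M a b /\ sat M (pr b b') E.
Proof.
  intros HM Da Hon b' Db'.
  destruct (extend_entries Phi HPhi Hrich M a (ffv E) b' Da) as [b [H1 [H2 H3]]].
  { intros i _. apply Hon. }
  { intros k _. exact (Db' k). }
  exists b. split.
  - split; [auto|split; [auto|split; [auto|apply same_entries_sym; auto]]].
  - apply (proj2 (coinc_pr M b b' b' b' (ffv E) E ltac:(intros i Hi; split; [apply H1; auto|auto])
       ltac:(apply ffv_ok2; lia))).
    apply (proj1 (HE M HM)); auto.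
Qed.

End Parts.


Section Star.
Context {L : language}.

Definition And (p q : formula L) : formula L := Imp (Imp p (Imp q Fls)) Fls.
Definition Or (p q : formula L) : formula L := Imp (Imp p Fls) q.
Definition Ex (p : formula L) : formula L := Imp (All (Imp p Fls)) Fls.
Fixpoint Exn (K : nat) (p : formula L) : formula L :=
  match K with 0 => p | S K => Ex (Exn K p) end.

Lemma And_sat (M : structure L) s p q : sat M s (And p q) <-> sat M s p /\ sat M s q.
Proof. simpl. tauto. Qed.
Lemma Or_sat (M : structure L) s p q : sat M s (Or p q) <-> sat M s p \/ sat M s q.
Proof. simpl. tauto. Qed.
Lemma Ex_sat (M : structure L) s p : sat M s (Ex p) <-> exists m, sat M (scons m s) p.
Proof.
  simpl. split.
  - intro H. apply NNPP. intro N. apply H. intros m Hm. apply N. eauto.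
  - intros [m Hm] H. exact (H m Hm).
Qed.

Definition glue {X} (K : nat) (t s : nat -> X) (v : nat) : X := if Nat.ltb v K then t v else s (v - K).

Lemma glue0 {X} (t s : nat -> X) : glue 0 t s = s.
Proof. apply functional_extensionality; intro v. unfold glue. simpl. f_equal; lia. Qed.

Lemma glueS {X} K (t s : nat -> X) m :
  glue K t (scons m s) = glue (S K) (fun v => if Nat.ltb v K then t v else m) s.
Proof.
  apply functional_extensionality; intro v. unfold glue.
  destruct (Nat.ltb_spec v K); destruct (Nat.ltb_spec v (S K)); try lia; auto.
  - assert (v = K) by lia. subst. rewrite Nat.sub_diag. reflexivity.
  - replace (v - K) with (S (v - S K)) by lia. reflexivity.
Qed.

Lemma glue_ext {X} K (t t' s : nat -> X) : (forall v, v < K -> t v = t' v) -> glue K t s = glue K t' s.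
Proof.
  intro H. apply functional_extensionality; intro v. unfold glue.
  destruct (Nat.ltb_spec v K); auto.
Qed.

Lemma Exn_sat (M : structure L) K p : forall s,
  sat M s (Exn K p) <-> exists t, sat M (glue K t s) p.
Proof.
  induction K; intro s; simpl Exn.
  - split; [intro H; exists s; rewrite glue0; auto|intros [t H]; rewrite glue0 in H; auto].
  - rewrite Ex_sat. split.
    + intros [m Hm]. apply IHK in Hm as [t Ht]. rewrite glueS in Ht. eauto.
    + intros [t Ht]. exists (t K). apply IHK. exists t. rewrite glueS.
      erewrite glue_ext; [exact Ht|]. intros v Hv. destruct (Nat.ltb_spec v K); auto.
      f_equal; lia.
Qed.

Lemma Exn_TV (M : structure L) (Sx : M -> Prop) (HT : forall (psi : formula L) (s : nat -> M), (forall v, Sx (s v)) ->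
    (exists y, sat M (scons y s) psi) -> exists y, Sx y /\ sat M (scons y s) psi) K p :
  forall s, (forall v, Sx (s v)) -> sat M s (Exn K p) -> exists t, (forall v, Sx (t v)) /\ sat M (glue K t s) p.
Proof.
  induction K; intros s Hs H; simpl Exn in H.
  - exists s. rewrite glue0. auto.
  - apply Ex_sat in H. destruct (HT _ s Hs H) as [m [Sm Hm]].
    destruct (IHK (scons m s)) as [t [St Ht]]; auto.
    { intros [|v]; simpl; auto. }
    exists (fun v => if Nat.ltb v K then t v else m). split.
    + intro v. destruct (Nat.ltb v K); auto.
    + rewrite <- glueS. auto.
Qed.

Lemma ffvb_Exn K : forall m p, ffvb (m + K) p -> ffvb m (Exn K p).
Proof.
  induction K; intros m p H; simpl.
  - rewrite Nat.add_0_r in H. auto.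
  - repeat split. apply IHK. replace (S m + K) with (m + S K) by lia. auto.
Qed.

End Star.


Section Part3.
Context {L : language} (T : theory L) (Phi : nat -> formula L) (HPhi : seq_ok Phi) (Hrich : rich Phi)
  (HL : countable_language L) (H : ty L -> Prop) (HH : Hcal T Phi H).

Lemma mkG (M : structure L) a b : model T M -> DPhi Phi M a -> DPhi Phi M b -> same_entries a b -> Gpair T Phi M a b.
Proof. intros; split; [auto|split; [auto|split; auto]]. Qed.

Lemma H_G p : H p -> Gset T Phi p.
Proof. destruct HH as [[[HG _] _] _]. auto. Qed.

Lemma H_open p : H p -> exists phi, p phi /\ forall q, Gset T Phi q -> q phi -> H q.
Proof. destruct HH as [[[_ Hop] _] _]. auto. Qed.

Lemma C_open p : Gset T Phi p -> ~ H p -> exists phi, p phi /\ forall q, Gset T Phi q -> q phi -> ~ H q.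
Proof.
  destruct HH as [[_ [_ Hcop]] _]. intros G N. destruct (Hcop p (conj G N)) as [phi [Hp Hq]].
  exists phi. split; auto. intros q Gq Hq'. apply (Hq q Gq Hq').
Qed.

Lemma H_B (M : structure L) a : model T M -> DPhi Phi M a -> H (tp2 M a a).
Proof.
  destruct HH as [_ [_ HB]]. intros HM Da. apply HB. exists M, a. split; auto. split; auto. intro; tauto.
Qed.

Lemma H_sym (M : structure L) a b : Gpair T Phi M a b -> H (tp2 M a b) -> H (tp2 M b a).
Proof.
  destruct HH as [_ [HHi _]]. intros G Hab. apply HHi.
  destruct G as [HM [Da [Db S]]].
  exists M, b, b, a. split; [apply mkG; auto; apply same_entries_refl|].
  split; [apply mkG; auto|]. split; [apply H_B; auto|]. split; auto. intro; tauto.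
Qed.

Lemma H_trans (M : structure L) a b c : Gpair T Phi M a b -> Gpair T Phi M b c ->
  H (tp2 M a b) -> H (tp2 M b c) -> H (tp2 M a c).
Proof.
  destruct HH as [_ [HHi _]]. intros Gab Gbc Hab Hbc. apply HHi.
  exists M, a, b, c. split; auto. split.
  - destruct Gbc as [HM [Db [Dc S]]]. apply mkG; auto. apply same_entries_sym; auto.
  - split; auto. split; [apply H_sym; auto|]. intro; tauto.
Qed.

Lemma sat_dbl (M : structure L) (a b : nat -> M) psi :
  sat M (pr a b) (frename (fun v => 2 * v) psi) <-> sat M a psi.
Proof. apply sat_rename_eq. intro; apply pr_even. Qed.

Lemma sat_dbl1 (M : structure L) (a b : nat -> M) psi :
  sat M (pr a b) (frename (fun v => 2 * v + 1) psi) <-> sat M b psi.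
Proof. apply sat_rename_eq. intro; apply pr_odd. Qed.

Lemma unsat_list (Sig : formula L -> Prop) :
  ~ (exists (M : structure L) (s : nat -> M), model T M /\ forall psi, Sig psi -> sat M s psi) ->
  exists l, (forall psi, In psi l -> Sig psi) /\ ~ satl T l.
Proof.
  intro N. apply NNPP. intro N2. apply N. apply (compactness HL T Sig).
  intros l Hl. apply NNPP. intro N3. apply N2. eauto.
Qed.

Definition openH (phi : formula L) : Prop := forall q, Gset T Phi q -> q phi -> H q.
Definition openC (phi : formula L) : Prop := forall q, Gset T Phi q -> q phi -> ~ H q.

Lemma claimA : exists N, forall (M : structure L) a b, Gpair T Phi M a b ->
  (forall i, i < N -> a i = b i) -> H (tp2 M a b).
Proof.
  set (Sig := fun psi => (exists k, psi = Dform Phi k) \/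
                        (exists phi, openH phi /\ psi = Imp (frename Nat.div2 phi) Fls)).
  destruct (unsat_list Sig) as [l [Hl Nl]].
  { intros [M [s [HM Hs]]].
    assert (Ds : DPhi Phi M s).
    { apply DPhi_iff. intro k. apply Hs. left. eauto. }
    destruct (H_open _ (H_B M s HM Ds)) as [phi [Hp Ho]].
    apply (Hs (Imp (frename Nat.div2 phi) Fls)). { right. eauto. }
    apply (sat_rename_eq M s (pr s s)). { intro v. unfold pr. destruct (Nat.even v); auto. }
    exact Hp. }
  assert (exists N, forall psi, In psi l -> (exists k, psi = Dform Phi k) \/
            exists phi, openH phi /\ ffvb (2 * N) phi /\ psi = Imp (frename Nat.div2 phi) Fls) as [N HN].
  { clear Nl. induction l as [|x l IH].
    - exists 0. intros _ [].
    - destruct IH as [N HN]. { intros; apply Hl; simpl; auto. }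
      destruct (Hl x (or_introl eq_refl)) as [D|[phi [Ho ->]]].
      + exists N. intros psi [<-|Hp]; auto.
      + exists (N + ffv phi). intros psi [<-|Hp].
        * right. exists phi. split; auto. split; auto. apply ffv_ok2. lia.
        * destruct (HN psi Hp) as [D|[phi' [Ho' [Hf' E']]]]; auto. right. exists phi'.
          split; auto. split; auto. apply (ffvb_mono _ (2 * N)); auto. lia. }
  exists N. intros M a b G Hpre.
  assert (Hex : exists psi, In psi l /\ ~ sat M a psi).
  { apply NNPP. intro N1. apply Nl. exists M, a. split; [apply G|].
    intros psi Hp. apply NNPP. intro N2. apply N1. eauto. }
  destruct Hex as [psi [Hp Np]].
  destruct (HN psi Hp) as [[k ->]|[phi [Ho [Hf ->]]]].
  - exfalso. apply Np. destruct G as [_ [Da _]]. apply (proj1 (DPhi_iff Phi M a) Da).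
  - apply Ho. { apply (Gset_of T Phi M a b G). }
    unfold tp2, tp.
    assert (S1 : sat M a (frename Nat.div2 phi)) by (apply NNPP; intro X; apply Np; simpl; auto).
    apply (sat_rename_eq M a (pr a a)) in S1; [|intro v; unfold pr; destruct (Nat.even v); auto].
    apply (proj1 (coinc_pr M a a a b N phi ltac:(intros i Hi; split; auto) Hf)). auto.
Qed.


Section WithN.
Variable N0 : nat.
Hypothesis hA : forall (M : structure L) a b, Gpair T Phi M a b ->
  (forall i, i < N0 -> a i = b i) -> H (tp2 M a b).

Definition dbl0 (v : nat) := 2 * v.
Definition dbl1 (v : nat) := 2 * v + 1.

Fixpoint DD (n : nat) : formula L :=
  match n with
  | 0 => Imp Fls Fls
  | S n => And (DD n) (And (frename dbl0 (Dform Phi n)) (frename dbl1 (Dform Phi n)))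
  end.

Lemma DD_sat (M : structure L) (a b : nat -> M) n :
  sat M (pr a b) (DD n) <-> forall k, k < n -> cond Phi M k a /\ cond Phi M k b.
Proof.
  induction n.
  - simpl. split; [intros _ k Hk; lia|tauto].
  - change (DD (S n)) with (And (DD n) (And (frename dbl0 (Dform Phi n)) (frename dbl1 (Dform Phi n)))).
    rewrite And_sat, IHn, And_sat. unfold dbl0, dbl1. rewrite sat_dbl, sat_dbl1, !Dform_sat.
    split.
    + intros [H1 [H2 H3]] k Hk. destruct (Nat.eq_dec k n); [subst; auto|apply H1; lia].
    + intro X. split; [intros; apply X; lia|apply X; lia].
Qed.

Lemma Dform_fv k : ffvb (S k) (Dform Phi k).
Proof.
  unfold Dform. simpl. split.
  - apply (ffvb_rename _ (S k)); [apply HPhi|]. intros v Hv. unfold rhok.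
    destruct (Nat.eqb_spec v k); lia.
  - apply (ffvb_rename _ (S k)); [apply HPhi|]. intros; lia.
Qed.

Lemma ffvb_And m (p q : formula L) : ffvb m p -> ffvb m q -> ffvb m (And p q).
Proof. intros; simpl; tauto. Qed.

Lemma DD_fv n : ffvb (2 * n) (DD n).
Proof.
  induction n; [simpl; auto|].
  change (DD (S n)) with (And (DD n) (And (frename dbl0 (Dform Phi n)) (frename dbl1 (Dform Phi n)))).
  apply ffvb_And; [|apply ffvb_And].
  - apply (ffvb_mono _ (2 * n)); auto; lia.
  - apply (ffvb_rename _ (S n)); [apply Dform_fv|]. unfold dbl0; intros; lia.
  - apply (ffvb_rename _ (S n)); [apply Dform_fv|]. unfold dbl1; intros; lia.
Qed.

Definition nn (phi : formula L) := N0 + ffv phi.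
Definition KK (phi : formula L) := 2 * ffv phi.
Definition rho (phi : formula L) (v : nat) := if Nat.ltb v (2 * N0) then v + KK phi else v - 2 * N0.
Definition body (phi : formula L) := And phi (DD (nn phi)).
Definition star (phi : formula L) := Exn (KK phi) (frename (rho phi) (body phi)).
Definition ext {X} (s t : nat -> X) (v : nat) := if Nat.ltb v (2 * N0) then s v else t (v - 2 * N0).

Lemma body_fv phi : ffvb (2 * nn phi) (body phi).
Proof.
  unfold body. apply ffvb_And.
  - apply ffv_ok2. unfold nn; lia.
  - apply DD_fv.
Qed.

Lemma star_fv phi : ffvb (2 * N0) (star phi).
Proof.
  unfold star. apply ffvb_Exn. apply (ffvb_rename _ (2 * nn phi)); [apply body_fv|].
  intros v Hv. unfold rho, KK, nn in *. destruct (Nat.ltb_spec v (2 * N0)); lia.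
Qed.

Lemma glue_rho {X} phi (t s : nat -> X) v : v < 2 * nn phi -> glue (KK phi) t s (rho phi v) = ext s t v.
Proof.
  intro Hv. unfold glue, rho, ext, KK, nn in *.
  destruct (Nat.ltb_spec v (2 * N0)).
  - destruct (Nat.ltb_spec (v + 2 * ffv phi) (2 * ffv phi)); [lia|]. f_equal; lia.
  - destruct (Nat.ltb_spec (v - 2 * N0) (2 * ffv phi)); [auto|lia].
Qed.

Lemma star_sat (M : structure L) (s : nat -> M) phi :
  sat M s (star phi) <-> exists t, sat M (ext s t) (body phi).
Proof.
  unfold star. rewrite Exn_sat. split; intros [t Ht]; exists t; revert Ht; rewrite sat_rename;
    apply (sat_coinc M _ (2 * nn phi)); try apply body_fv; intros v Hv; rewrite glue_rho; auto.
Qed.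

Lemma star_TV (M : structure L) (Sx : M -> Prop) (HT : TVC M Sx) (s : nat -> M) phi :
  (forall v, Sx (s v)) -> sat M s (star phi) -> exists t, (forall v, Sx (t v)) /\ sat M (ext s t) (body phi).
Proof.
  intros Hs Hst. unfold star in Hst. destruct (Exn_TV M Sx HT _ _ s Hs Hst) as [t [St Ht]].
  exists t. split; auto. revert Ht. rewrite sat_rename. apply (sat_coinc M _ (2 * nn phi)); [apply body_fv|].
  intros v Hv. rewrite glue_rho; auto.
Qed.

Definition sp1 {X} (a t : nat -> X) (i : nat) := if Nat.ltb i N0 then a i else t (2 * (i - N0)).
Definition sp2 {X} (b t : nat -> X) (i : nat) := if Nat.ltb i N0 then b i else t (2 * (i - N0) + 1).

Lemma pr_split {X} (a b t : nat -> X) : ext (pr a b) t = pr (sp1 a t) (sp2 b t).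
Proof.
  apply (pr_eq (ext (pr a b) t) (ext (pr a b) t)); intro i; unfold ext, sp1, sp2.
  - destruct (Nat.ltb_spec (2 * i) (2 * N0)); destruct (Nat.ltb_spec i N0); try lia.
    + apply pr_even.
    + f_equal; lia.
  - destruct (Nat.ltb_spec (2 * i + 1) (2 * N0)); destruct (Nat.ltb_spec i N0); try lia.
    + apply pr_odd.
    + f_equal; lia.
Qed.

Lemma star_of (M : structure L) (a b : nat -> M) phi :
  DPhi Phi M a -> DPhi Phi M b -> sat M (pr a b) phi -> sat M (pr a b) (star phi).
Proof.
  intros Da Db Hp. apply star_sat. exists (fun v => pr a b (v + 2 * N0)).
  assert (E : ext (pr a b) (fun v => pr a b (v + 2 * N0)) = pr a b).
  { apply functional_extensionality; intro v. unfold ext. destruct (Nat.ltb_spec v (2 * N0)); auto.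
    f_equal; lia. }
  rewrite E. unfold body. apply And_sat. split; auto. apply DD_sat. intros k _. split; [exact (Da k)|exact (Db k)].
Qed.

Lemma SWstar (M : structure L) (a' b' : nat -> M) phi :
  Gpair T Phi M a' b' -> sat M (pr a' b') (star phi) ->
  exists a b, Gpair T Phi M a b /\ sat M (pr a b) phi /\ same_entries a a' /\
    (forall i, i < N0 -> a i = a' i /\ b i = b' i).
Proof.
  intros G Hs. destruct G as [HM [Da' [Db' S']]].
  set (Sx := fun m => exists i, a' i = m).
  assert (HT : TVC M Sx) by (eapply TVC_entries; eauto).
  destruct (star_TV M Sx HT (pr a' b') phi) as [t [St Ht]]; auto.
  { intro v. unfold pr. destruct (Nat.even v); [unfold Sx; eauto|].
    destruct (proj2 S' (Nat.div2 v)) as [i Hi]. exists i; auto. }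
  rewrite pr_split in Ht. unfold body in Ht. apply And_sat in Ht as [Hphi HD].
  pose proof (proj1 (DD_sat M _ _ _) HD) as HD0. clear HD. rename HD0 into HD.
  destruct (extend_entries Phi HPhi Hrich M a' (nn phi) (sp1 a' t) Da') as [a [A1 [A2 A3]]].
  { intros i _. unfold sp1. destruct (Nat.ltb i N0); eauto. apply St. }
  { intros k Hk. apply HD; auto. }
  destruct (extend_entries Phi HPhi Hrich M a' (nn phi) (sp2 b' t) Da') as [b [B1 [B2 B3]]].
  { intros i _. unfold sp2. destruct (Nat.ltb i N0); [|apply St].
    destruct (proj2 S' i) as [j Hj]. eauto. }
  { intros k Hk. apply HD; auto. }
  exists a, b. split; [apply mkG; auto; eapply same_entries_trans; [exact A3|apply same_entries_sym; exact B3]|].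
  split; [|split; [auto|]].
  - apply (proj2 (coinc_pr M a b (sp1 a' t) (sp2 b' t) (nn phi) phi
      ltac:(intros i Hi; split; auto) ltac:(apply ffv_ok2; unfold nn; lia))). auto.
  - intros i Hi. rewrite A1, B1 by (unfold nn; lia). unfold sp1, sp2.
    destruct (Nat.ltb_spec i N0); [auto|lia].
Qed.

Lemma transfer (M : structure L) (a b a' b' : nat -> M) :
  Gpair T Phi M a b -> Gpair T Phi M a' b' -> same_entries a a' ->
  (forall i, i < N0 -> a i = a' i /\ b i = b' i) -> (H (tp2 M a b) <-> H (tp2 M a' b')).
Proof.
  intros G G' S Hp.
  destruct G as [HM [Da [Db Sab]]]. destruct G' as [_ [Da' [Db' Sab']]].
  assert (Gaa : Gpair T Phi M a a') by (apply mkG; auto).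
  assert (Gbb : Gpair T Phi M b b').
  { apply mkG; auto. eapply same_entries_trans; [apply same_entries_sym; exact Sab|].
    eapply same_entries_trans; [exact S|exact Sab']. }
  assert (Hab : Gpair T Phi M a b) by (apply mkG; auto).
  assert (Hab' : Gpair T Phi M a' b') by (apply mkG; auto).
  assert (Haa : H (tp2 M a a')) by (apply hA; auto; intros i Hi; apply (proj1 (Hp i Hi))).
  assert (Hbb : H (tp2 M b b')) by (apply hA; auto; intros i Hi; apply (proj2 (Hp i Hi))).
  assert (Ga'a : Gpair T Phi M a' a) by (apply mkG; auto; apply same_entries_sym; auto).
  assert (Gb'b : Gpair T Phi M b' b).
  { apply mkG; auto; apply same_entries_sym; destruct Gbb as [_ [_ [_ X]]]; exact X. }
  assert (Gab' : Gpair T Phi M a b') by (apply mkG; auto; eapply same_entries_trans; eauto).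
  assert (Ga'b : Gpair T Phi M a' b).
  { apply mkG; auto. eapply same_entries_trans; [apply same_entries_sym; exact S|exact Sab]. }
  split; intro X.
  - apply (H_trans M a' a b'); auto. { apply H_sym; auto. }
    apply (H_trans M a b b'); auto.
  - apply (H_trans M a a' b); auto. apply (H_trans M a' b' b); auto. apply H_sym; auto.
Qed.


Lemma agree_pr (M : structure L) (a b a' b' : nat -> M) N :
  (forall i, i < N -> a i = a' i /\ b i = b' i) -> forall v, v < 2 * N -> pr a b v = pr a' b' v.
Proof.
  intros Hp v Hv. destruct (even_or_odd v) as [i [-> | ->]]; rewrite ?pr_even, ?pr_odd; apply Hp; lia.
Qed.

Lemma definable : exists chi, ffvb (2 * N0) chi /\
  forall (M : structure L) (a b a' b' : nat -> M), model T M -> DPhi Phi M a -> DPhi Phi M b ->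
    Gpair T Phi M a' b' -> (forall i, i < N0 -> a' i = a i /\ b' i = b i) ->
    (sat M (pr a b) chi <-> H (tp2 M a' b')).
Proof.
  set (Sig := fun psi => (exists k, k < N0 /\ (psi = frename dbl0 (Dform Phi k) \/ psi = frename dbl1 (Dform Phi k))) \/
      (exists phi, openH phi /\ psi = Imp (star phi) Fls) \/ (exists phi, openC phi /\ psi = Imp (star phi) Fls)).
  destruct (unsat_list Sig) as [l [Hl Nl]].
  { intros [M [s [HM Hs]]].
    set (u := fun i => s (2 * i)). set (w := fun i => s (2 * i + 1)).
    assert (Cu : forall k, k < N0 -> cond Phi M k u).
    { intros k Hk. apply Dform_sat. apply (proj1 (sat_rename_eq M s u dbl0 _ ltac:(intro; reflexivity))).
      apply Hs. left. exists k. auto. }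
    assert (Cw : forall k, k < N0 -> cond Phi M k w).
    { intros k Hk. apply Dform_sat. apply (proj1 (sat_rename_eq M s w dbl1 _ ltac:(intro; reflexivity))).
      apply Hs. left. exists k. auto. }
    destruct (extend_any Phi HPhi Hrich M N0 u u Cu) as [a0 [A1 [A2 _]]].
    destruct (extend_any Phi HPhi Hrich M N0 w w Cw) as [b0 [B1 [B2 _]]].
    destruct (extend3 Phi HPhi Hrich M a0 b0 b0 N0 A2 B2 B2) as [a' [b' [c' [Da' [Db' [_ [S1 [_ Hpre]]]]]]]].
    assert (G : Gpair T Phi M a' b') by (apply mkG; auto).
    assert (Agr : forall phi, sat M (pr a' b') (star phi) -> sat M s (star phi)).
    { intros phi X.
      assert (Eq : forall v, v < 2 * N0 -> pr a' b' v = s v).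
      { intros v Hv. destruct (even_or_odd v) as [i [-> | ->]]; rewrite ?pr_even, ?pr_odd.
        - destruct (Hpre i ltac:(lia)) as [E1 _]. rewrite E1, A1 by lia. reflexivity.
        - destruct (Hpre i ltac:(lia)) as [_ [E1 _]]. rewrite E1, B1 by lia. reflexivity. }
      apply (proj1 (sat_coinc M _ (2 * N0) (pr a' b') s (star_fv phi) Eq)); auto. }
    destruct (classic (H (tp2 M a' b'))) as [Hy|Hn].
    - destruct (H_open _ Hy) as [phi [Hp Ho]].
      apply (Hs (Imp (star phi) Fls)). { right. left. eauto. }
      apply Agr. apply star_of; auto.
    - destruct (C_open _ (Gset_of T Phi M a' b' G) Hn) as [phi [Hp Ho]].
      apply (Hs (Imp (star phi) Fls)). { right. right. eauto. }
      apply Agr. apply star_of; auto. }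
  assert (exists chi, ffvb (2 * N0) chi /\ forall (M : structure L) (s : nat -> M), sat M s chi <->
            exists psi, In psi l /\ exists phi, openH phi /\ psi = Imp (star phi) Fls /\ sat M s (star phi))
    as [chi [Hchi Cchi]].
  { clear Hl Nl. induction l as [|x l IH].
    - exists Fls. split; [simpl; auto|]. intros M s. simpl. split; [tauto|]. intros [psi [[] _]].
    - destruct IH as [chi [Hf Hc]].
      destruct (classic (exists phi, openH phi /\ x = Imp (star phi) Fls)) as [[phi [Ho ->]]|N].
      + exists (Or (star phi) chi). split. { simpl. split; [split; auto; apply star_fv|auto]. }
        intros M s. rewrite Or_sat, Hc. split.
        * intros [X|[psi [I R]]]; [exists (Imp (star phi) Fls); split; [left; auto|eauto]|].
          exists psi; split; [right; auto|auto].
        * intros [psi [[<-|I] [phi0 [Ho0 [E X]]]]].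
          { left. injection E as E. rewrite E. auto. }
          right. exists psi. split; auto. eauto.
      + exists chi. split; auto. intros M s. rewrite Hc. split.
        * intros [psi [I R]]. exists psi. split; [right|]; auto.
        * intros [psi [[<-|I] [phi0 [Ho0 [E X]]]]].
          { exfalso. apply N. eauto. }
          exists psi. split; auto. eauto. }
  exists chi. split; auto.
  intros M a b a' b' HM Da Db G' Hpre.
  assert (Hpre' : forall i, i < N0 -> a i = a' i /\ b i = b' i).
  { intros i Hi. destruct (Hpre i Hi); split; auto. }
  assert (Tr : forall phi, sat M (pr a b) (star phi) -> exists a0 b0, Gpair T Phi M a0 b0 /\
              sat M (pr a0 b0) phi /\ (H (tp2 M a0 b0) <-> H (tp2 M a' b'))).
  { intros phi X. assert (X' : sat M (pr a' b') (star phi)).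
    { apply (proj1 (coinc_pr M a b a' b' N0 _ Hpre' (star_fv phi))). auto. }
    destruct (SWstar M a' b' phi G' X') as [a0 [b0 [G0 [P0 [S0 Q0]]]]].
    exists a0, b0. split; auto. split; auto. apply transfer; auto. }
  split.
  - intro X. apply Cchi in X as [psi [I [phi [Ho [E X]]]]].
    destruct (Tr phi X) as [a0 [b0 [G0 [P0 E0]]]]. apply E0. apply Ho; auto. apply Gset_of; auto.
  - intro Hy.
    assert (Hex : exists psi, In psi l /\ ~ sat M (pr a b) psi).
    { apply NNPP. intro N1. apply Nl. exists M, (pr a b). split; [auto|].
      intros psi Hp. apply NNPP. intro N2. apply N1. eauto. }
    destruct Hex as [psi [I Np]].
    destruct (Hl psi I) as [[k [Hk [-> | ->]]]|[[phi [Ho ->]]|[phi [Ho ->]]]].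
    + exfalso. apply Np. unfold dbl0. apply sat_dbl. apply (proj1 (DPhi_iff Phi M a) Da).
    + exfalso. apply Np. unfold dbl1. apply sat_dbl1. apply (proj1 (DPhi_iff Phi M b) Db).
    + apply Cchi. exists (Imp (star phi) Fls). split; auto. exists phi. split; auto. split; auto.
      apply NNPP. intro X. apply Np. simpl. auto.
    + exfalso. assert (X : sat M (pr a b) (star phi)) by (apply NNPP; intro X; apply Np; simpl; auto).
      destruct (Tr phi X) as [a0 [b0 [G0 [P0 E0]]]]. apply (Ho (tp2 M a0 b0)); auto.
      * apply Gset_of; auto.
      * apply E0; auto.
Qed.

End WithN.

Lemma H_eqty p q : H p -> Gset T Phi q -> eqty p q -> H q.
Proof. intros Hp Gq E. destruct (H_open p Hp) as [phi [P O]]. apply O; auto. apply E; auto. Qed.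

Lemma part3 : exists E, def_equiv T Phi E /\ (forall p, bracket T Phi E p <-> H p).
Proof.
  destruct claimA as [N0 hA].
  destruct (definable N0 hA) as [chi [Hf Hc]].
  exists chi. split.
  - intros M HM. split; [|split].
    + intros a Da. apply (Hc M a a a a HM Da Da); [apply mkG; auto; apply same_entries_refl|intros; auto|].
      apply H_B; auto.
    + intros a b Da Db X.
      destruct (extend3 Phi HPhi Hrich M a b b N0 Da Db Db) as [a' [b' [c' [Da' [Db' [_ [S1 [_ Hpre]]]]]]]].
      assert (G : Gpair T Phi M a' b') by (apply mkG; auto).
      assert (G2 : Gpair T Phi M b' a') by (apply mkG; auto; apply same_entries_sym; auto).
      apply (Hc M b a b' a' HM Db Da G2). { intros i Hi. destruct (Hpre i Hi) as [? [? ?]]; auto. }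
      apply H_sym; auto. apply (Hc M a b a' b' HM Da Db G); auto.
      intros i Hi. destruct (Hpre i Hi) as [? [? ?]]; auto.
    + intros a b c Da Db Dc X Y.
      destruct (extend3 Phi HPhi Hrich M a b c N0 Da Db Dc) as [a' [b' [c' [Da' [Db' [Dc' [S1 [S2 Hpre]]]]]]]].
      assert (Gab : Gpair T Phi M a' b') by (apply mkG; auto).
      assert (Gbc : Gpair T Phi M b' c') by (apply mkG; auto).
      assert (Gac : Gpair T Phi M a' c') by (apply mkG; auto; eapply same_entries_trans; eauto).
      apply (Hc M a c a' c' HM Da Dc Gac). { intros i Hi. destruct (Hpre i Hi) as [? [? ?]]; auto. }
      apply (H_trans M a' b' c'); auto.
      * apply (Hc M a b a' b' HM Da Db Gab); auto. intros i Hi. destruct (Hpre i Hi) as [? [? ?]]; auto.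
      * apply (Hc M b c b' c' HM Db Dc Gbc); auto. intros i Hi. destruct (Hpre i Hi) as [? [? ?]]; auto.
  - intro p. split.
    + intros [Gp Hp]. destruct Gp as [M [a [b [G E]]]].
      destruct G as [HM [Da [Db S]]].
      assert (Hab : H (tp2 M a b)).
      { apply (Hc M a b a b HM Da Db); [apply mkG; auto|intros; auto|]. apply E; auto. }
      apply (H_eqty (tp2 M a b)); [auto| |intro; split; apply E].
      exists M, a, b. split; [apply mkG; auto|auto].
    + intro Hp. pose proof (H_G p Hp) as Gp. split; auto.
      destruct Gp as [M [a [b [G E]]]].
      assert (Hab : H (tp2 M a b)) by (apply (H_eqty p); auto; apply Gset_of; auto).
      destruct G as [HM [Da [Db S]]].
      apply E. apply (Hc M a b a b HM Da Db); [apply mkG; auto|intros; auto|auto].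
Qed.


End Part3.

Theorem lemma3p6 (L : language) (T : theory L) (Phi : nat -> formula L)
  (HL : countable_language L) (HT : complete_theory T)
  (HT2 : no_singleton_model T) (HPhi : seq_ok Phi) (Hrich : rich Phi) :
  (* E |-> [E]_G lands in the set of clopen H = H H^-1 containing B *)
  (forall E, def_equiv T Phi E -> Hcal T Phi (bracket T Phi E)) /\
  (* injective modulo agreement on D_Phi *)
  (forall E E', def_equiv T Phi E -> def_equiv T Phi E' ->
     (forall p, bracket T Phi E p <-> bracket T Phi E' p) -> agree_on_D T Phi E E') /\
  (* surjective *)
  (forall H, Hcal T Phi H ->
     exists E, def_equiv T Phi E /\ (forall p, bracket T Phi E p <-> H p)) /\
  (* the coset map tp(a,b)H |-> [b]_E *)
  (forall (E : formula L) (M : structure L) (a : nat -> M),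
     def_equiv T Phi E -> model T M -> DPhi Phi M a ->
     (forall m : M, exists i, a i = m) ->
     (* well-defined and injective *)
     (forall b b' : nat -> M, Gpair T Phi M a b -> Gpair T Phi M a b' ->
        ((forall k, coset T Phi (tp2 M a b) (bracket T Phi E) k <->
                    coset T Phi (tp2 M a b') (bracket T Phi E) k)
         <-> sat M (pr b b') E)) /\
     (* every coset in e G / H is of the form tp(a,b) H with b in M *)
     (forall C, eGmodH T Phi (tp M a) (bracket T Phi E) C ->
        exists b : nat -> M, Gpair T Phi M a b /\
          (forall k, C k <-> coset T Phi (tp2 M a b) (bracket T Phi E) k)) /\
     (* onto the E-classes of tuples in M realising D_Phi *)
     (forall b' : nat -> M, DPhi Phi M b' ->
        exists b : nat -> M, Gpair T Phi M a b /\ sat M (pr b b') E)).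
Proof.
  split; [|split; [|split]].
  - intros E HE. exact (part1 T Phi E HE).
  - intros E E' HE HE' Hb. exact (part2 T Phi HPhi Hrich E E' HE HE' Hb).
  - intros H HH. exact (part3 T Phi HPhi Hrich HL H HH).
  - intros E M a HE HM Da Hon. split; [|split].
    + intros b b' G G'. exact (part4_1 T Phi E HE M a b b' G G').
    + intros C HC. exact (part4_2 T Phi E M a HM Da C HC).
    + exact (part4_3 T Phi HPhi Hrich E HE M a HM Da Hon).
Qed.
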